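(* Let $\mathcal a>1$, $\mathcal b>0$, $1<\mathcal c<\tfrac32$, $t_0>0$, $\beta,\beta_0>0$, and let $f\in C^2([t_0,t_m))$ be the solution of $$f''+\frac{\mathcal a}{t}f'-\frac{\mathcal b}{t^2}f(1+f)-\frac{\mathcal c(f')^2}{1+f}=0,\qquad f(t_0)=\beta,\ f'(t_0)=\beta_0,$$ on its maximal interval of existence $[t_0,t_m)$. Let $\theta\ge1$ and $A>0$ with $A\theta<\frac{2\mathcal b}{3-2\mathcal c}$, let $g(t)=\exp\big(-A\int_{t_0}^t\frac{f(s)(1+f(s))}{s^2f'(s)}ds\big)$ and $\eta_\theta(t):=\frac{1}{g(t)^\theta(1+f(t))}$. Then $\eta_\theta\in C^1([t_0,t_m))$, there is $C_\star>0$ with $0<\eta_\theta(t)\le C_\star$ for all $t\in[t_0,t_m)$, and $\lim_{t\to t_m}\eta_\theta(t)=0$ (so $\eta_\theta$ extends continuously to $[t_0,t_m]$ with $\eta_\theta(t_m)=0$).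
   Context: It is known (from prior work) that $t_m\in(t_0,\infty]$, $f>0$, $f'>0$ on $[t_0,t_m)$, $f(t),f'(t)\to+\infty$ as $t\to t_m$, and, if $t_m=\infty$, $1+f(t)>\exp(\mathtt C t^{(\bar{\mathcal a}+\triangle)/2}+\mathtt D t^{-1})$ with $\mathtt C>0$, $\triangle=\sqrt{(1-\mathcal a)^2+4\mathcal b}$, $\bar{\mathcal a}=1-\mathcal a$; and that $\chi(t)=\frac{t^{2-\mathcal a}f'(t)}{(1+f(t))^{2-\mathcal c}f(t)g(t)^{\mathcal b/A}}$ is bounded on $[t_0,t_m)$. *)

(* Defs.v *)
From Stdlib Require Import Reals.
From Coquelicot Require Import Coquelicot.
Open Scope R_scope.

Definition Ico (a : R) (b : Rbar) (t : R) : Prop := a <= t /\ Rbar_lt t b.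

(* u' is the derivative of u on the set I, taken within I
   (so at the left endpoint of [a,b) it is the right derivative) *)
Definition deriv_within (I : R -> Prop) (u u' : R -> R) : Prop :=
  forall t, I t ->
    filterlim (fun s => (u s - u t) / (s - t))
      (within (fun s => I s /\ s <> t) (locally t)) (locally (u' t)).

Definition cont_within (I : R -> Prop) (u : R -> R) : Prop :=
  forall t, I t -> filterlim u (within I (locally t)) (locally (u t)).

Definition C1_on (I : R -> Prop) (u : R -> R) : Prop :=
  exists u', deriv_within I u u' /\ cont_within I u'.

Definition is_sol (a b c t0 beta beta0 : R) (t1 : Rbar) (f : R -> R) : Prop :=
  exists f1 f2 : R -> R,
    deriv_within (Ico t0 t1) f f1 /\
    deriv_within (Ico t0 t1) f1 f2 /\
    cont_within (Ico t0 t1) f2 /\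
    (forall t, Ico t0 t1 t ->
       1 + f t <> 0 /\
       f2 t + a / t * f1 t - b / t ^ 2 * f t * (1 + f t)
         - c * (f1 t) ^ 2 / (1 + f t) = 0) /\
    f t0 = beta /\ f1 t0 = beta0.

Definition is_max_sol (a b c t0 beta beta0 : R) (tm : Rbar) (f : R -> R) : Prop :=
  Rbar_lt t0 tm /\
  is_sol a b c t0 beta beta0 tm f /\
  ~ (exists (t1 : Rbar) (h : R -> R),
       Rbar_lt tm t1 /\ is_sol a b c t0 beta beta0 t1 h /\
       (forall t, Ico t0 tm t -> h t = f t)).

Definition gfun (A t0 : R) (f : R -> R) (t : R) : R :=
  exp (- A * RInt (fun s => f s * (1 + f s) / (s ^ 2 * Derive f s)) t0 t).

Definition eta (A theta t0 : R) (f : R -> R) (t : R) : R :=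
  / (Rpower (gfun A t0 f t) theta * (1 + f t)).

(* the filter "t -> tm, t < tm" on R (tm finite: left limit; tm = +oo: t -> +oo) *)
Definition to_left (tm : Rbar) : (R -> Prop) -> Prop :=
  within (fun t : R => Rbar_lt (Finite t) tm) (Rbar_locally' tm).

(* Main.v *)
Require Import Defs.
From Stdlib Require Import Reals Lra Lia Classical.
From Coquelicot Require Import Coquelicot.
Open Scope R_scope.

Lemma ballR (x y e : R) : ball x e y <-> Rabs (y - x) < e.
Proof. reflexivity. Qed.

Lemma locally_R (x : R) (P : R -> Prop) :
  locally x P <-> exists d, 0 < d /\ forall y, Rabs (y - x) < d -> P y.
Proof.
  split.
  - intros [e He]. exists e. split. apply cond_pos. intros y Hy. apply He. exact Hy.
  - intros [d [Hd H]]. exists (mkposreal d Hd). intros y Hy. apply H. exact Hy.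
Qed.

Lemma lt_tm (s t : R) (tm : Rbar) : s <= t -> Rbar_lt t tm -> Rbar_lt s tm.
Proof. destruct tm; simpl; intros; lra. Qed.

Lemma lt_tm_exists (t : R) (tm : Rbar) : Rbar_lt t tm ->
  exists d, 0 < d /\ forall s, s < t + d -> Rbar_lt s tm.
Proof.
  destruct tm as [r| |]; simpl; intros H.
  - exists (r - t). split. lra. intros; lra.
  - exists 1. split. lra. auto.
  - contradiction.
Qed.

Lemma deriv_pos_left (u : R -> R) (t l : R) : is_derive u t l -> 0 < l ->
  exists d, 0 < d /\ forall s, t - d < s < t -> u s < u t.
Proof.
  intros H Hl. apply is_derive_Reals in H.
  destruct (H l Hl) as [d Hd]. exists d. split. apply cond_pos.
  intros s Hs. specialize (Hd (s - t)).
  replace (t + (s - t)) with s in Hd by ring.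
  assert (Hq : Rabs ((u s - u t) / (s - t) - l) < l).
  { apply Hd. lra. rewrite Rabs_left; lra. }
  apply Rabs_def2 in Hq. destruct Hq as [_ Hq].
  assert (0 < (u s - u t) / (s - t)) by lra.
  assert (s - t < 0) by lra.
  destruct (Rle_or_lt (u t) (u s)) as [h|h]; [|exact h].
  assert ((u s - u t) / (s - t) <= 0).
  { unfold Rdiv. assert (/ (s - t) < 0) by (apply Rinv_lt_0_compat; lra). nra. }
  lra.
Qed.

Lemma deriv_pos_right (u : R -> R) (t l : R) : is_derive u t l -> 0 < l ->
  exists d, 0 < d /\ forall s, t < s < t + d -> u t < u s.
Proof.
  intros H Hl. apply is_derive_Reals in H.
  destruct (H l Hl) as [d Hd]. exists d. split. apply cond_pos.
  intros s Hs. specialize (Hd (s - t)).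
  replace (t + (s - t)) with s in Hd by ring.
  assert (Hq : Rabs ((u s - u t) / (s - t) - l) < l).
  { apply Hd. lra. rewrite Rabs_right; lra. }
  apply Rabs_def2 in Hq. destruct Hq as [_ Hq].
  destruct (Rle_or_lt (u s) (u t)) as [h|h]; [|exact h].
  assert ((u s - u t) / (s - t) <= 0).
  { unfold Rdiv. assert (0 < / (s - t)) by (apply Rinv_0_lt_compat; lra). nra. }
  lra.
Qed.

Lemma cont_ind (T : R) (tm : Rbar) (Q : R -> Prop) :
  (forall t, T <= t -> Rbar_lt t tm -> (forall s, T <= s < t -> Q s) ->
     exists d, 0 < d /\ forall s, t <= s < t + d -> Rbar_lt s tm -> Q s) ->
  forall t, T <= t -> Rbar_lt t tm -> Q t.
Proof.
  intros H ts H1 H2. apply NNPP. intros Hn.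
  set (E := fun x => T <= x <= ts /\ forall s, T <= s < x -> Q s).
  assert (Hb : bound E). { exists ts. intros x [Hx _]. lra. }
  assert (He : exists x, E x). { exists T. split. lra. intros; lra. }
  destruct (completeness E Hb He) as [S [HS1 HS2]].
  assert (HTS : T <= S). { apply HS1. split. lra. intros; lra. }
  assert (HSt : S <= ts). { apply HS2. intros x [Hx _]. lra. }
  assert (HQ : forall s, T <= s < S -> Q s).
  { intros s Hs. apply NNPP. intros Hq.
    assert (S <= s). { apply HS2. intros x [Hx Hx']. destruct (Rle_or_lt x s) as [h|h]; auto.
      exfalso. apply Hq. apply Hx'. lra. }
    lra. }
  destruct (H S HTS (lt_tm _ _ _ HSt H2) HQ) as [d [Hd Hs]].
  destruct (Rlt_or_le ts (S + d)) as [h|h].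
  - apply Hn. apply Hs; [split; lra | exact H2].
  - assert (E (S + d/2)).
    { split. lra. intros s Hs'. destruct (Rlt_or_le s S). apply HQ; lra.
      apply Hs. lra. apply lt_tm with ts; auto. lra. }
    assert (S + d/2 <= S) by (apply HS1; auto). lra.
Qed.


Lemma cont_eps (u : R -> R) (t : R) : continuous u t ->
  forall e, 0 < e -> exists d, 0 < d /\ forall s, Rabs (s - t) < d -> Rabs (u s - u t) < e.
Proof.
  intros H e He. apply filterlim_locally with (eps := mkposreal e He) in H.
  apply locally_R in H. destruct H as [d [Hd H]]. exists d. split; auto.
Qed.

Definition rcont (T : R) (u : R -> R) := forall e, 0 < e ->
  exists d, 0 < d /\ forall s, T <= s < T + d -> Rabs (u s - u T) < e.

Lemma cont_rcont (T : R) (u : R -> R) : continuous u T -> rcont T u.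
Proof.
  intros H e He. destruct (cont_eps u T H e He) as [d [Hd H']].
  exists d. split; auto. intros s Hs. apply H'. rewrite Rabs_right; lra.
Qed.

Lemma barrier (T : R) (tm : Rbar) (u u' : R -> R) (m : R) :
  Rbar_lt T tm -> rcont T u ->
  (forall t, T < t -> Rbar_lt t tm -> is_derive u t (u' t)) -> m < u T ->
  (forall t, T < t -> Rbar_lt t tm -> (forall s, T <= s < t -> m < u s) ->
     u t = m -> 0 < u' t) ->
  forall t, T <= t -> Rbar_lt t tm -> m < u t.
Proof.
  intros HT Hrc Hd Hm Hb. apply cont_ind.
  intros t Ht Htm HQ. destruct (Req_dec t T) as [->|hne].
  - destruct (Hrc (u T - m)) as [d [Hd0 Hd1]]. lra.
    exists d. split; auto. intros s Hs _. specialize (Hd1 s Hs).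
    apply Rabs_def2 in Hd1. lra.
  - assert (HtT : T < t) by lra.
    assert (Hc : continuous u t).
    { apply (ex_derive_continuous (K:=R_AbsRing) (V:=R_NormedModule)). eexists. apply Hd; auto. }
    assert (Hut : m < u t).
    { destruct (Rtotal_order m (u t)) as [h|[h|h]]; auto; exfalso.
      - destruct (deriv_pos_left u t (u' t) (Hd t HtT Htm)) as [d [Hd0 Hd1]].
        apply Hb; auto.
        set (s := t - Rmin d (t - T) / 2).
        assert (Hmin : 0 < Rmin d (t - T)) by (apply Rmin_glb_lt; lra).
        assert (Rmin d (t - T) <= d) by apply Rmin_l.
        assert (Rmin d (t - T) <= t - T) by apply Rmin_r.
        specialize (Hd1 s). specialize (HQ s). unfold s in *.
        assert (u (t - Rmin d (t - T) / 2) < u t) by (apply Hd1; lra).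
        assert (m < u (t - Rmin d (t - T) / 2)) by (apply HQ; lra). lra.
      - destruct (cont_eps u t Hc (m - u t)) as [d [Hd0 Hd1]]. lra.
        set (s := t - Rmin d (t - T) / 2).
        assert (Hmin : 0 < Rmin d (t - T)) by (apply Rmin_glb_lt; lra).
        assert (Rmin d (t - T) <= d) by apply Rmin_l.
        assert (Rmin d (t - T) <= t - T) by apply Rmin_r.
        specialize (Hd1 s). specialize (HQ s). unfold s in *.
        assert (HH : Rabs (u (t - Rmin d (t - T) / 2) - u t) < m - u t).
        { apply Hd1. rewrite Rabs_left; lra. }
        assert (m < u (t - Rmin d (t - T) / 2)) by (apply HQ; lra).
        apply Rabs_def2 in HH. lra. }
    destruct (cont_eps u t Hc (u t - m)) as [d [Hd0 Hd1]]. lra.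
    exists d. split; auto. intros s Hs _.
    assert (HH : Rabs (u s - u t) < u t - m) by (apply Hd1; rewrite Rabs_right; lra).
    apply Rabs_def2 in HH. lra.
Qed.

Lemma mono (T : R) (tm : Rbar) (u u' : R -> R) :
  Rbar_lt T tm -> rcont T u ->
  (forall t, T < t -> Rbar_lt t tm -> is_derive u t (u' t)) ->
  (forall t, T < t -> Rbar_lt t tm -> 0 <= u' t) ->
  forall t, T <= t -> Rbar_lt t tm -> u T <= u t.
Proof.
  intros HT Hrc Hd Hp t Ht Htm.
  assert (Hall : forall e, 0 < e -> u T - e * (t - T) - e < u t).
  { intros e He.
    set (w := fun s => u s - u T + e * (s - T) + e).
    assert (0 < w t).
    { apply (barrier T tm w (fun s => u' s + e) 0); auto.
      - intros e' He'. destruct (Hrc (e'/2)) as [d [Hd0 Hd1]]. lra.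
        exists (Rmin d (e' / (2 * e))). split.
        apply Rmin_glb_lt; auto. apply Rdiv_lt_0_compat; lra.
        intros s Hs. unfold w.
        assert (Rmin d (e' / (2 * e)) <= d) by apply Rmin_l.
        assert (Hm : Rmin d (e' / (2 * e)) <= e' / (2 * e)) by apply Rmin_r.
        assert (Rabs (u s - u T) < e'/2) by (apply Hd1; lra).
        assert (e * (s - T) <= e'/2).
        { assert (e * (s - T) <= e * (e' / (2 * e))) by (apply Rmult_le_compat_l; lra).
          replace (e * (e' / (2 * e))) with (e'/2) in H1 by (field; lra). lra. }
        replace (u s - u T + e * (s - T) + e - (u T - u T + e * (T - T) + e))
          with ((u s - u T) + e * (s - T)) by ring.
        apply Rabs_def2 in H0. apply Rabs_def1; nra.
      - intros s Hs1 Hs2. unfold w. specialize (Hd s Hs1 Hs2).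
        auto_derive. eexists; eauto.
        change (Derive (fun x => u x) s) with (Derive u s).
        rewrite (is_derive_unique _ _ _ Hd). ring.
      - unfold w. lra.
      - intros s Hs1 Hs2 _ _. specialize (Hp s Hs1 Hs2). lra. }
    unfold w in H. nra. }
  destruct (Rle_or_lt (u T) (u t)) as [h|h]; auto.
  set (e := (u T - u t) / (t - T + 2)).
  assert (He : 0 < e) by (apply Rdiv_lt_0_compat; lra).
  specialize (Hall e He).
  assert (e * (t - T + 1) < u T - u t).
  { unfold e. apply Rmult_lt_reg_r with (t - T + 2). lra.
    field_simplify; [|lra]. nra. }
  nra.
Qed.

Lemma within_R (D : R -> Prop) (t : R) (P : R -> Prop) :
  within D (locally t) P <-> exists d, 0 < d /\ forall y, Rabs (y - t) < d -> D y -> P y.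
Proof. unfold within. apply locally_R. Qed.

Lemma dw_interior (t0 : R) (tm : Rbar) (u u' : R -> R) (t : R) :
  deriv_within (Ico t0 tm) u u' -> t0 < t -> Rbar_lt t tm -> is_derive u t (u' t).
Proof.
  intros H Ht Htm. apply is_derive_Reals. intros e He.
  assert (Hi : Ico t0 tm t) by (split; [lra|auto]).
  specialize (H t Hi). apply filterlim_locally with (eps := mkposreal e He) in H.
  apply within_R in H. destruct H as [d [Hd H]].
  destruct (lt_tm_exists t tm Htm) as [d2 [Hd2 H2]].
  assert (Hm : 0 < Rmin d (Rmin (t - t0) d2)).
  { apply Rmin_glb_lt; auto. apply Rmin_glb_lt; lra. }
  exists (mkposreal _ Hm). intros h Hh0 Hh. simpl in Hh.
  assert (Rmin d (Rmin (t - t0) d2) <= d) by apply Rmin_l.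
  assert (Rmin (t - t0) d2 <= t - t0) by apply Rmin_l.
  assert (Rmin (t - t0) d2 <= d2) by apply Rmin_r.
  assert (Rmin d (Rmin (t - t0) d2) <= Rmin (t - t0) d2) by apply Rmin_r.
  apply Rabs_def2 in Hh.
  specialize (H (t + h)). replace (t + h - t) with h in H by ring.
  apply H. apply Rabs_def1; lra. split. split. lra. apply H2. lra. lra.
Qed.

Lemma cw_rcont (t0 : R) (tm : Rbar) (u : R -> R) :
  cont_within (Ico t0 tm) u -> Rbar_lt t0 tm -> rcont t0 u.
Proof.
  intros H Htm e He.
  assert (Hi : Ico t0 tm t0) by (split; [lra|auto]).
  specialize (H t0 Hi). apply filterlim_locally with (eps := mkposreal e He) in H.
  apply within_R in H. destruct H as [d [Hd H]].
  destruct (lt_tm_exists t0 tm Htm) as [d2 [Hd2 H2]].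
  exists (Rmin d d2). split. apply Rmin_glb_lt; auto.
  intros s Hs.
  assert (Rmin d d2 <= d) by apply Rmin_l. assert (Rmin d d2 <= d2) by apply Rmin_r.
  apply H. rewrite Rabs_right; lra. split. lra. apply H2. lra.
Qed.

Lemma cw_cont (t0 : R) (tm : Rbar) (u : R -> R) (t : R) :
  cont_within (Ico t0 tm) u -> t0 < t -> Rbar_lt t tm -> continuous u t.
Proof.
  intros H Ht Htm. apply filterlim_locally. intros e.
  assert (Hi : Ico t0 tm t) by (split; [lra|auto]).
  specialize (H t Hi). apply filterlim_locally with (eps := e) in H.
  apply within_R in H. destruct H as [d [Hd H]].
  destruct (lt_tm_exists t tm Htm) as [d2 [Hd2 H2]].
  apply locally_R. exists (Rmin d (Rmin (t - t0) d2)). split.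
  apply Rmin_glb_lt; auto. apply Rmin_glb_lt; lra.
  intros y Hy.
  assert (Rmin d (Rmin (t - t0) d2) <= d) by apply Rmin_l.
  assert (Rmin (t - t0) d2 <= t - t0) by apply Rmin_l.
  assert (Rmin (t - t0) d2 <= d2) by apply Rmin_r.
  assert (Rmin d (Rmin (t - t0) d2) <= Rmin (t - t0) d2) by apply Rmin_r.
  apply Rabs_def2 in Hy.
  apply H. apply Rabs_def1; lra. split. lra. apply H2. lra.
Qed.

Lemma cR_plus (f g : R -> R) x : continuous f x -> continuous g x -> continuous (fun y => f y + g y) x.
Proof. intros. apply (continuous_plus (V:=R_NormedModule)); auto. Qed.
Lemma cR_mult (f g : R -> R) x : continuous f x -> continuous g x -> continuous (fun y => f y * g y) x.
Proof. intros. apply (continuous_mult (K:=R_AbsRing)); auto. Qed.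
Lemma cR_opp (f : R -> R) x : continuous f x -> continuous (fun y => - f y) x.
Proof. intros. apply (continuous_opp (V:=R_NormedModule)); auto. Qed.
Lemma cR_minus (f g : R -> R) x : continuous f x -> continuous g x -> continuous (fun y => f y - g y) x.
Proof. intros. apply (continuous_minus (V:=R_NormedModule)); auto. Qed.
Lemma cR_inv (f : R -> R) x : continuous f x -> f x <> 0 -> continuous (fun y => / f y) x.
Proof. intros. apply continuous_Rinv_comp; auto. Qed.
Lemma cR_div (f g : R -> R) x : continuous f x -> continuous g x -> g x <> 0 -> continuous (fun y => f y / g y) x.
Proof. intros. unfold Rdiv. apply cR_mult; auto. apply cR_inv; auto. Qed.
Lemma cR_const (c x : R) : continuous (fun _ : R => c) x.
Proof. apply continuous_const. Qed.
Lemma cR_id (x : R) : continuous (fun y : R => y) x.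
Proof. apply continuous_id. Qed.
Lemma cR_pow (f : R -> R) n x : continuous f x -> continuous (fun y => f y ^ n) x.
Proof. intros H. induction n; simpl. apply cR_const. apply cR_mult; auto. Qed.
Lemma cR_exp (f : R -> R) x : continuous f x -> continuous (fun y => exp (f y)) x.
Proof. apply continuous_exp_comp. Qed.
Lemma cR_ln (f : R -> R) x : continuous f x -> 0 < f x -> continuous (fun y => ln (f y)) x.
Proof. intros. apply (continuous_comp f ln). auto. apply continuous_ln; auto. Qed.

Lemma cont_ext_loc (f g : R -> R) x : locally x (fun y => f y = g y) -> continuous f x -> continuous g x.
Proof.
  intros Hl H. apply filterlim_locally. intros e. apply locally_R.
  apply locally_R in Hl. destruct Hl as [d0 [Hd0 Hl]].
  destruct (cont_eps f x H e (cond_pos e)) as [d [Hd H']].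
  exists (Rmin d d0). split. apply Rmin_glb_lt; auto.
  intros y Hy.
  assert (Rmin d d0 <= d) by apply Rmin_l. assert (Rmin d d0 <= d0) by apply Rmin_r.
  change (Rabs (g y - g x) < e).
  rewrite <- (Hl y) by lra. rewrite <- (Hl x) by (rewrite Rminus_diag, Rabs_R0; auto).
  apply H'. lra.
Qed.

Lemma rcont_ext (T : R) (u w : R -> R) : (forall s, T <= s -> u s = w s) -> rcont T w -> rcont T u.
Proof.
  intros He H e Hep. destruct (H e Hep) as [d [Hd H']]. exists d. split; auto.
  intros s Hs. rewrite !He by lra. apply H'; auto.
Qed.

Lemma rcont_maxc (T : R) (u : R -> R) : rcont T u -> continuous (fun s => u (Rmax s T)) T.
Proof.
  intros H. apply filterlim_locally. intros e. apply locally_R.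
  destruct (H e (cond_pos e)) as [d [Hd H']]. exists d. split; auto.
  intros y Hy. rewrite (Rmax_right T T) by lra. unfold ball; simpl; unfold AbsRing_ball; simpl.
  unfold minus, plus, opp; simpl. change (Rabs (u (Rmax y T) + - u T) < e).
  destruct (Rle_or_lt y T).
  - rewrite Rmax_right by lra. rewrite Rplus_opp_r, Rabs_R0. apply cond_pos.
  - rewrite Rmax_left by lra. apply H'. apply Rabs_def2 in Hy. lra.
Qed.

Lemma dw_cw (I : R -> Prop) (u u' : R -> R) : deriv_within I u u' -> cont_within I u.
Proof.
  intros H t Ht. specialize (H t Ht).
  apply filterlim_locally. intros e.
  apply filterlim_locally with (eps := mkposreal 1 Rlt_0_1) in H.
  apply within_R in H. destruct H as [d [Hd H]]. apply within_R.
  set (K := Rabs (u' t) + 1).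
  assert (HK : 0 < K) by (unfold K; generalize (Rabs_pos (u' t)); lra).
  exists (Rmin d (e / K)). split. apply Rmin_glb_lt; auto. apply Rdiv_lt_0_compat; auto. apply cond_pos.
  intros y Hy HIy. change (Rabs (u y - u t) < e).
  assert (Rmin d (e / K) <= d) by apply Rmin_l. assert (Hm : Rmin d (e / K) <= e / K) by apply Rmin_r.
  destruct (Req_dec y t) as [->|hne]. rewrite Rminus_diag, Rabs_R0. apply cond_pos.
  assert (Hy' : Rabs (y - t) < Rmin d (e / K)) by exact Hy.
  assert (Hq : Rabs ((u y - u t) / (y - t) - u' t) < 1) by (apply H; [lra|split; auto]).
  assert (Hq' : Rabs ((u y - u t) / (y - t)) <= K).
  { unfold K. replace ((u y - u t) / (y - t)) with (((u y - u t) / (y - t) - u' t) + u' t) by ring.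
    eapply Rle_trans. apply Rabs_triang. lra. }
  replace (u y - u t) with ((u y - u t) / (y - t) * (y - t)) by (field; lra).
  rewrite Rabs_mult.
  assert (Rabs (y - t) < e / K) by lra.
  assert (0 < Rabs (y - t)) by (apply Rabs_pos_lt; lra).
  assert (Rabs ((u y - u t) / (y - t)) * Rabs (y - t) <= K * Rabs (y - t)).
  { apply Rmult_le_compat_r; lra. }
  assert (HH : K * Rabs (y - t) < K * (e / K)) by (apply Rmult_lt_compat_l; lra).
  replace (K * (e / K)) with (pos e) in HH by (field; lra). lra.
Qed.

Lemma mono_closed (T t : R) (u u' : R -> R) :
  T < t -> rcont T u ->
  (forall s, T < s <= t -> is_derive u s (u' s)) ->
  (forall s, T < s < t -> 0 <= u' s) -> u T <= u t.
Proof.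
  intros HT Hrc Hd Hp.
  assert (Hm : forall s, T <= s < t -> u T <= u s).
  { intros s Hs. apply (mono T (Finite t) u u');
    [simpl; lra | exact Hrc | intros x H1 H2; simpl in H2; apply Hd; lra
    | intros x H1 H2; simpl in H2; apply Hp; lra | lra | simpl; lra]. }
  assert (Hc : continuous u t).
  { apply (ex_derive_continuous (K:=R_AbsRing) (V:=R_NormedModule)). eexists. apply Hd; lra. }
  destruct (Rle_or_lt (u T) (u t)) as [h|h]; auto. exfalso.
  destruct (cont_eps u t Hc (u T - u t)) as [d [Hd0 Hd1]]. lra.
  set (s := t - Rmin d (t - T) / 2).
  assert (0 < Rmin d (t - T)) by (apply Rmin_glb_lt; lra).
  assert (Rmin d (t - T) <= d) by apply Rmin_l. assert (Rmin d (t - T) <= t - T) by apply Rmin_r.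
  assert (HH : Rabs (u s - u t) < u T - u t) by (apply Hd1; unfold s; rewrite Rabs_left; lra).
  assert (u T <= u s) by (apply Hm; unfold s; lra).
  apply Rabs_def2 in HH. lra.
Qed.

Record SOL (a b c t0 beta beta0 : R) (tm : Rbar) (f f1 f2 : R -> R) : Prop := {
  S_a : 1 < a; S_b : 0 < b; S_c1 : 1 < c; S_c2 : c < 3/2; S_t0 : 0 < t0;
  S_beta : 0 < beta; S_beta0 : 0 < beta0;
  S_tm : Rbar_lt t0 tm;
  S_d1 : deriv_within (Ico t0 tm) f f1; S_d2 : deriv_within (Ico t0 tm) f1 f2;
  S_cf2 : cont_within (Ico t0 tm) f2;
  S_ode : forall t, Ico t0 tm t ->
     f2 t = - a / t * f1 t + b / t^2 * f t * (1 + f t) + c * f1 t ^ 2 / (1 + f t);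
  S_f0 : f t0 = beta; S_f10 : f1 t0 = beta0 }.


Lemma sol_basic a b c t0 beta beta0 tm f f1 f2 : SOL a b c t0 beta beta0 tm f f1 f2 ->
  (forall t, t0 < t -> Rbar_lt t tm -> is_derive f t (f1 t)) /\
  (forall t, t0 < t -> Rbar_lt t tm -> is_derive f1 t (f2 t)) /\
  (forall t, t0 < t -> Rbar_lt t tm -> continuous f2 t) /\
  rcont t0 f /\ rcont t0 f1 /\ rcont t0 f2.
Proof.
  intros S. split; [|split; [|split; [|split; [|split]]]].
  - intros; eapply dw_interior; eauto. apply (S_d1 _ _ _ _ _ _ _ _ _ _ S).
  - intros; eapply dw_interior; eauto. apply (S_d2 _ _ _ _ _ _ _ _ _ _ S).
  - intros; eapply cw_cont; eauto. apply (S_cf2 _ _ _ _ _ _ _ _ _ _ S).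
  - eapply cw_rcont. eapply dw_cw. apply (S_d1 _ _ _ _ _ _ _ _ _ _ S). apply (S_tm _ _ _ _ _ _ _ _ _ _ S).
  - eapply cw_rcont. eapply dw_cw. apply (S_d2 _ _ _ _ _ _ _ _ _ _ S). apply (S_tm _ _ _ _ _ _ _ _ _ _ S).
  - eapply cw_rcont. apply (S_cf2 _ _ _ _ _ _ _ _ _ _ S). apply (S_tm _ _ _ _ _ _ _ _ _ _ S).
Qed.

Ltac getS S := destruct S as [Ha Hb Hc1 Hc2 Ht0 Hbeta Hbeta0 Htm Hd1 Hd2 Hcf2 Hode Hf0 Hf10].

Lemma sol_pos a b c t0 beta beta0 tm f f1 f2 : SOL a b c t0 beta beta0 tm f f1 f2 ->
  (forall t, t0 <= t -> Rbar_lt t tm -> 0 < f1 t) /\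
  (forall t, t0 <= t -> Rbar_lt t tm -> beta <= f t).
Proof.
  intros S. destruct (sol_basic _ _ _ _ _ _ _ _ _ _ S) as [D1 [D2 [C2 [R0 [R1 R2]]]]].
  getS S.
  assert (P : forall t, t0 <= t -> Rbar_lt t tm -> 0 < f1 t).
  { apply (barrier t0 tm f1 f2 0); auto. lra.
    intros t Ht Htm' H H0.
    assert (Hft : beta <= f t).
    { rewrite <- Hf0. apply (mono_closed t0 t f f1); auto.
      intros s Hs. apply D1. lra. apply lt_tm with t; auto. lra.
      intros s Hs. left. apply H. lra. }
    rewrite Hode by (split; [lra|auto]). rewrite H0.
    assert (0 < b / t ^ 2) by (apply Rdiv_lt_0_compat; auto; apply pow_lt; lra).
    assert (1 + f t <> 0) by lra.
    replace (- a / t * 0 + b / t ^ 2 * f t * (1 + f t) + c * 0 ^ 2 / (1 + f t))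
      with (b / t ^ 2 * f t * (1 + f t)) by (field; lra).
    apply Rmult_lt_0_compat; [apply Rmult_lt_0_compat|]; lra. }
  split; auto.
  intros t Ht Htm'. rewrite <- Hf0. apply (mono t0 tm f f1); auto.
  intros s Hs1 Hs2. left. apply P; auto. lra.
Qed.

Ltac rwD := repeat match goal with |- context [Derive (fun x => ?u x) ?s] =>
  change (Derive (fun x => u x) s) with (Derive u s) end.

Definition vfun (f f1 : R -> R) (t : R) := t * f1 t / (1 + f t).

Lemma sol_v a b c t0 beta beta0 tm f f1 f2 : SOL a b c t0 beta beta0 tm f f1 f2 ->
  exists m, 0 < m /\ forall t, t0 <= t -> Rbar_lt t tm -> m < vfun f f1 t.
Proof.
  intros S. destruct (sol_basic _ _ _ _ _ _ _ _ _ _ S) as [D1 [D2 [C2 [R0 [R1 R2]]]]].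
  destruct (sol_pos _ _ _ _ _ _ _ _ _ _ S) as [P1 P2].
  getS S.
  assert (Hv0 : 0 < vfun f f1 t0).
  { unfold vfun. rewrite Hf0, Hf10. apply Rdiv_lt_0_compat; nra. }
  set (m := Rmin (vfun f f1 t0) (b * beta / (a - 1)) / 2).
  assert (Hm1 : Rmin (vfun f f1 t0) (b * beta / (a - 1)) <= vfun f f1 t0) by apply Rmin_l.
  assert (Hm2 : Rmin (vfun f f1 t0) (b * beta / (a - 1)) <= b * beta / (a - 1)) by apply Rmin_r.
  assert (Hm3 : 0 < Rmin (vfun f f1 t0) (b * beta / (a - 1))).
  { apply Rmin_glb_lt; auto. apply Rdiv_lt_0_compat; nra. }
  exists m. split. unfold m; lra.
  apply (barrier t0 tm (vfun f f1)
     (fun t => ((1 - a) * vfun f f1 t + b * f t + (c - 1) * vfun f f1 t ^ 2) / t)); auto.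
  - apply rcont_ext with (fun s => s * f1 (Rmax s t0) / (1 + f (Rmax s t0))).
    { intros s Hs. unfold vfun. rewrite Rmax_left by lra. reflexivity. }
    apply cont_rcont. apply cR_div. apply cR_mult. apply cR_id. apply rcont_maxc; auto.
    apply cR_plus. apply cR_const. apply rcont_maxc; auto.
    rewrite Rmax_left by lra. rewrite Hf0. lra.
  - intros t Ht Htm'.
    assert (Hpf := P2 t (Rlt_le _ _ Ht) Htm').
    unfold vfun. auto_derive.
    + repeat split; auto. eexists; apply D2; auto. eexists; apply D1; auto. lra.
    + rwD. rewrite (is_derive_unique _ _ _ (D2 t Ht Htm')).
      rewrite (is_derive_unique _ _ _ (D1 t Ht Htm')).
      rewrite Hode by (split; [lra|auto]). field. lra.
  - unfold m. lra.
  - intros t Ht Htm' _ Hvt. rewrite Hvt.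
    assert (Hpf := P2 t (Rlt_le _ _ Ht) Htm').
    apply Rdiv_lt_0_compat; [|lra].
    assert (Hma : (a - 1) * m < b * beta).
    { unfold m. assert (b * beta / (a - 1) * (a - 1) = b * beta) by (field; lra). nra. }
    assert (0 < m) by (unfold m; lra). nra.
Qed.

Lemma contE (t0 : R) (tm : Rbar) (u : R -> R) :
  Rbar_lt t0 tm -> rcont t0 u -> (forall t, t0 < t -> Rbar_lt t tm -> continuous u t) ->
  forall t : R, Rbar_lt t tm -> continuous (fun s => u (Rmax s t0)) t.
Proof.
  intros Htm Hr Hc t Ht. destruct (Rtotal_order t t0) as [h|[h|h]].
  - apply cont_ext_loc with (fun _ => u t0). 2: apply cR_const.
    apply locally_R. exists (t0 - t). split. lra. intros y Hy.
    apply Rabs_def2 in Hy. rewrite Rmax_right by lra. reflexivity.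
  - rewrite h. apply rcont_maxc; exact Hr.
  - apply cont_ext_loc with u. 2: apply Hc; auto.
    apply locally_R. exists (t - t0). split. lra. intros y Hy.
    apply Rabs_def2 in Hy. rewrite Rmax_left by lra. reflexivity.
Qed.

Lemma to_left_ev (t0 : R) (tm : Rbar) (P : R -> Prop) :
  Rbar_lt t0 tm -> to_left tm P ->
  exists T, t0 < T /\ Rbar_lt T tm /\ forall s, T <= s -> Rbar_lt s tm -> P s.
Proof.
  intros Htm H. unfold to_left, within in H. destruct tm as [r| |]; simpl in *.
  - destruct H as [d Hd].
    exists (Rmax ((t0 + r) / 2) (r - d / 2)).
    assert ((t0 + r)/2 <= Rmax ((t0 + r) / 2) (r - d / 2)) by apply Rmax_l.
    assert (r - d/2 <= Rmax ((t0 + r) / 2) (r - d / 2)) by apply Rmax_r.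
    assert (0 < d) by apply cond_pos.
    assert (Rmax ((t0 + r) / 2) (r - d / 2) < r).
    { apply Rmax_lub_lt; lra. }
    split. lra. split. auto. intros s Hs1 Hs2. apply Hd.
    change (Rabs (s - r) < d). rewrite Rabs_left; lra. lra. auto.
  - destruct H as [M HM]. exists (Rmax (t0 + 1) (M + 1)).
    assert (t0 + 1 <= Rmax (t0 + 1) (M + 1)) by apply Rmax_l.
    assert (M + 1 <= Rmax (t0 + 1) (M + 1)) by apply Rmax_r.
    split. lra. split. auto. intros s Hs _. apply HM. lra. auto.
  - contradiction.
Qed.

Lemma to_left_of (T : R) (tm : Rbar) (P : R -> Prop) :
  Rbar_lt T tm -> (forall s, T <= s -> Rbar_lt s tm -> P s) -> to_left tm P.
Proof.
  intros HT H. unfold to_left, within. destruct tm as [r| |]; simpl in *.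
  - assert (Hd : 0 < r - T) by lra. exists (mkposreal _ Hd). intros y Hy _ Hyr.
    apply H; simpl; auto. change (Rabs (y - r) < r - T) in Hy. apply Rabs_def2 in Hy. lra.
  - exists T. intros y Hy _. apply H; simpl; auto. lra.
  - contradiction.
Qed.

Lemma dw_of_derive (I : R -> Prop) (u w w' : R -> R) :
  (forall t, I t -> is_derive w t (w' t)) -> (forall t, I t -> u t = w t) ->
  deriv_within I u w'.
Proof.
  intros Hd He t Ht. apply filterlim_locally. intros e. apply within_R.
  specialize (Hd t Ht). apply is_derive_Reals in Hd.
  destruct (Hd e (cond_pos e)) as [d Hdd]. exists d. split. apply cond_pos.
  intros y Hy [HIy Hne]. change (Rabs ((u y - u t) / (y - t) - w' t) < e).
  rewrite !He by auto. specialize (Hdd (y - t)). replace (t + (y - t)) with y in Hdd by ring.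
  apply Hdd. lra. auto.
Qed.

Lemma cw_of_cont (I : R -> Prop) (u w : R -> R) :
  (forall t, I t -> continuous w t) -> (forall t, I t -> u t = w t) -> cont_within I u.
Proof.
  intros Hc He t Ht. apply filterlim_locally. intros e. apply within_R.
  destruct (cont_eps w t (Hc t Ht) e (cond_pos e)) as [d [Hd H]].
  exists d. split; auto. intros y Hy HIy. change (Rabs (u y - u t) < e).
  rewrite !He by auto. apply H; auto.
Qed.

Definition fe (t0 : R) (f : R -> R) (s : R) := f (Rmax s t0).
Definition hhe (t0 : R) (f f1 : R -> R) (s : R) :=
  fe t0 f s * (1 + fe t0 f s) / ((Rmax s t0) ^ 2 * fe t0 f1 s).
Definition Gf (t0 : R) (f f1 : R -> R) (t : R) := RInt (hhe t0 f f1) t0 t.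
Definition Lam (theta A t0 : R) (f f1 : R -> R) (t : R) :=
  theta * A * Gf t0 f f1 t - ln (1 + f t).

Lemma sol_cont_all a b c t0 beta beta0 tm f f1 f2 : SOL a b c t0 beta beta0 tm f f1 f2 ->
  (forall t : R, Rbar_lt t tm -> continuous (fe t0 f) t) /\
  (forall t : R, Rbar_lt t tm -> continuous (fe t0 f1) t) /\
  (forall t : R, Rbar_lt t tm -> continuous (fun s => Rmax s t0) t).
Proof.
  intros S. destruct (sol_basic _ _ _ _ _ _ _ _ _ _ S) as [D1 [D2 [C2 [R0 [R1 R2]]]]].
  assert (Htm := S_tm _ _ _ _ _ _ _ _ _ _ S).
  split; [|split]; intros t Ht.
  - apply (contE t0 tm f); auto. intros s Hs1 Hs2.
    apply (ex_derive_continuous (K:=R_AbsRing) (V:=R_NormedModule)). eexists; apply D1; auto.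
  - apply (contE t0 tm f1); auto. intros s Hs1 Hs2.
    apply (ex_derive_continuous (K:=R_AbsRing) (V:=R_NormedModule)). eexists; apply D2; auto.
  - apply (contE t0 tm (fun s => s)); auto. apply cont_rcont, cR_id. intros; apply cR_id.
Qed.

Lemma sol_hhe a b c t0 beta beta0 tm f f1 f2 : SOL a b c t0 beta beta0 tm f f1 f2 ->
  forall t : R, Rbar_lt t tm -> continuous (hhe t0 f f1) t /\ 0 < hhe t0 f f1 t.
Proof.
  intros S t Ht. destruct (sol_cont_all _ _ _ _ _ _ _ _ _ _ S) as [E0 [E1 E2]].
  destruct (sol_pos _ _ _ _ _ _ _ _ _ _ S) as [P1 P2].
  assert (Ht0 := S_t0 _ _ _ _ _ _ _ _ _ _ S). assert (Hb := S_beta _ _ _ _ _ _ _ _ _ _ S).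
  assert (Htm := S_tm _ _ _ _ _ _ _ _ _ _ S).
  assert (Hm : t0 <= Rmax t t0) by apply Rmax_r.
  assert (Hmt : Rbar_lt (Rmax t t0) tm).
  { unfold Rmax. destruct (Rle_dec t t0); auto. }
  assert (0 < fe t0 f1 t) by (apply P1; auto).
  assert (beta <= fe t0 f t) by (apply P2; auto).
  split.
  - unfold hhe. apply cR_div. apply cR_mult. apply E0; auto. apply cR_plus. apply cR_const.
    apply E0; auto. apply cR_mult. apply (cR_pow (fun s => Rmax s t0)). apply E2; auto. apply E1; auto.
    apply Rgt_not_eq. apply Rmult_lt_0_compat; auto. apply pow_lt. lra.
  - unfold hhe. apply Rdiv_lt_0_compat. apply Rmult_lt_0_compat; lra.
    apply Rmult_lt_0_compat; auto. apply pow_lt. lra.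
Qed.

Lemma sol_G a b c t0 beta beta0 tm f f1 f2 : SOL a b c t0 beta beta0 tm f f1 f2 ->
  forall t : R, Rbar_lt t tm -> is_derive (Gf t0 f f1) t (hhe t0 f f1 t).
Proof.
  intros S t Ht. assert (Htm := S_tm _ _ _ _ _ _ _ _ _ _ S).
  apply (is_derive_RInt _ _ t0). 2: exact (proj1 (sol_hhe _ _ _ _ _ _ _ _ _ _ S t Ht)).
  destruct (lt_tm_exists t tm Ht) as [d [Hd H]].
  apply locally_R. exists d. split; auto. intros y Hy. apply Rabs_def2 in Hy.
  apply RInt_correct. apply ex_RInt_continuous. intros z Hz.
  apply (sol_hhe _ _ _ _ _ _ _ _ _ _ S).
  assert (Hz2 : z <= Rmax t0 y) by apply Hz.
  unfold Rmax in Hz2. destruct (Rle_dec t0 y). apply lt_tm with y; auto. apply H; lra.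
  apply lt_tm with t0; auto.
Qed.

Lemma eta_eq a b c t0 beta beta0 tm f f1 f2 theta A : SOL a b c t0 beta beta0 tm f f1 f2 ->
  forall t, t0 <= t -> Rbar_lt t tm -> eta A theta t0 f t = exp (Lam theta A t0 f f1 t).
Proof.
  intros S t Ht Htm'. destruct (sol_basic _ _ _ _ _ _ _ _ _ _ S) as [D1 _].
  destruct (sol_pos _ _ _ _ _ _ _ _ _ _ S) as [P1 P2].
  assert (Hb := S_beta _ _ _ _ _ _ _ _ _ _ S).
  unfold eta, gfun, Lam, Gf.
  rewrite (RInt_ext _ (hhe t0 f f1)).
  2:{ intros x Hx. rewrite Rmin_left in Hx by lra. rewrite Rmax_right in Hx by lra.
      unfold hhe, fe. rewrite Rmax_left by lra.
      rewrite (is_derive_unique _ _ _ (D1 x (proj1 Hx) (lt_tm _ _ _ (Rlt_le _ _ (proj2 Hx)) Htm'))).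
      reflexivity. }
  set (R0 := RInt (hhe t0 f f1) t0 t).
  assert (Hf : 0 < 1 + f t) by (generalize (P2 t Ht Htm'); lra).
  unfold Rpower. rewrite ln_exp.
  replace (theta * A * R0 - ln (1 + f t)) with (-(theta * (- A * R0)) + - ln (1 + f t)) by ring.
  rewrite exp_plus, !exp_Ropp, exp_ln by lra.
  assert (0 < exp (theta * (- A * R0))) by apply exp_pos.
  field. split; lra.
Qed.

Definition fE (t0 beta beta0 : R) (f : R -> R) (s : R) :=
  if Rlt_dec s t0 then beta + beta0 * (s - t0) else f s.

Lemma fE_der a b c t0 beta beta0 tm f f1 f2 : SOL a b c t0 beta beta0 tm f f1 f2 ->
  forall t, t0 <= t -> Rbar_lt t tm -> is_derive (fE t0 beta beta0 f) t (f1 t).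
Proof.
  intros S t Ht Htm'. destruct (sol_basic _ _ _ _ _ _ _ _ _ _ S) as [D1 _].
  assert (Hd1 := S_d1 _ _ _ _ _ _ _ _ _ _ S). assert (Hf0 := S_f0 _ _ _ _ _ _ _ _ _ _ S).
  assert (Hf10 := S_f10 _ _ _ _ _ _ _ _ _ _ S).
  destruct (Rle_lt_or_eq_dec _ _ Ht) as [h|h].
  - apply is_derive_ext_loc with f. 2: apply D1; auto.
    apply locally_R. exists (t - t0). split. lra. intros y Hy. apply Rabs_def2 in Hy.
    unfold fE. destruct (Rlt_dec y t0); auto. lra.
  - subst t. apply is_derive_Reals. intros e He.
    assert (Hi : Ico t0 tm t0) by (split; [lra|auto]).
    specialize (Hd1 t0 Hi). apply filterlim_locally with (eps := mkposreal e He) in Hd1.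
    apply within_R in Hd1. destruct Hd1 as [d [Hd H]].
    destruct (lt_tm_exists t0 tm Htm') as [d2 [Hd2 H2]].
    assert (Hm : 0 < Rmin d d2) by (apply Rmin_glb_lt; auto).
    exists (mkposreal _ Hm). intros h Hh0 Hh. simpl in Hh.
    assert (Rmin d d2 <= d) by apply Rmin_l. assert (Rmin d d2 <= d2) by apply Rmin_r.
    apply Rabs_def2 in Hh. unfold fE.
    destruct (Rlt_dec t0 t0) as [hh|_]. lra.
    destruct (Rlt_dec (t0 + h) t0) as [hl|hl].
    + replace ((beta + beta0 * (t0 + h - t0) - f t0) / h - f1 t0) with 0.
      rewrite Rabs_R0; lra. rewrite Hf0, Hf10. field. auto.
    + specialize (H (t0 + h)). replace (t0 + h - t0) with h in H by ring.
      apply H. apply Rabs_def1; lra. split. split. lra. apply H2. lra. lra.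
Qed.

Lemma eta_C1 a b c t0 beta beta0 tm f f1 f2 theta A : SOL a b c t0 beta beta0 tm f f1 f2 ->
  C1_on (Ico t0 tm) (eta A theta t0 f).
Proof.
  intros S. destruct (sol_pos _ _ _ _ _ _ _ _ _ _ S) as [P1 P2].
  destruct (sol_cont_all _ _ _ _ _ _ _ _ _ _ S) as [E0 [E1 E2]].
  assert (Hb := S_beta _ _ _ _ _ _ _ _ _ _ S).
  exists (fun t => exp (Lam theta A t0 f f1 t) * (theta * A * hhe t0 f f1 t - f1 t / (1 + f t))).
  split.
  - apply dw_of_derive with
      (fun s => exp (theta * A * Gf t0 f f1 s - ln (1 + fE t0 beta beta0 f s))).
    + intros t [Ht Htm'].
      assert (HfE : fE t0 beta beta0 f t = f t).
      { unfold fE. destruct (Rlt_dec t t0); auto. lra. }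
      assert (Hpos : 0 < 1 + f t) by (generalize (P2 t Ht Htm'); lra).
      assert (HG := sol_G _ _ _ _ _ _ _ _ _ _ S t Htm').
      assert (HF := fE_der _ _ _ _ _ _ _ _ _ _ S t Ht Htm').
      auto_derive.
      * split. eexists; exact HG. split. eexists; exact HF. split. rewrite HfE; lra. auto.
      * rwD. rewrite (is_derive_unique _ _ _ HG), (is_derive_unique _ _ _ HF).
        unfold Lam. rewrite HfE. unfold Rminus. field. lra.
    + intros t [Ht Htm']. rewrite (eta_eq _ _ _ _ _ _ _ _ _ _ _ _ S t Ht Htm').
      unfold Lam, fE. destruct (Rlt_dec t t0); auto. lra.
  - apply cw_of_cont with
      (fun s => exp (theta * A * Gf t0 f f1 s - ln (1 + fe t0 f s)) *
                (theta * A * hhe t0 f f1 s - fe t0 f1 s / (1 + fe t0 f s))).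
    + intros t [Ht Htm'].
      assert (Hpos : 0 < 1 + fe t0 f t).
      { unfold fe. rewrite Rmax_left by lra. generalize (P2 t Ht Htm'); lra. }
      assert (HG := sol_G _ _ _ _ _ _ _ _ _ _ S t Htm').
      assert (HGc : continuous (Gf t0 f f1) t).
      { apply (ex_derive_continuous (K:=R_AbsRing) (V:=R_NormedModule)). eexists; exact HG. }
      assert (Hh := proj1 (sol_hhe _ _ _ _ _ _ _ _ _ _ S t Htm')).
      apply cR_mult. apply cR_exp. apply cR_minus.
      apply (cR_mult (fun _ => theta * A)). apply cR_const. auto.
      apply cR_ln; auto. apply cR_plus. apply cR_const. auto.
      apply cR_minus. apply (cR_mult (fun _ => theta * A)). apply cR_const. auto.
      apply cR_div; auto. apply cR_plus. apply cR_const. auto. lra.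
    + intros t [Ht Htm']. unfold Lam, fe. rewrite Rmax_left by lra. reflexivity.
Qed.

Definition phif (f f1 : R -> R) (t : R) := t ^ 2 * f1 t ^ 2 / ((1 + f t) ^ 2 * f t).
Definition Bf (a b c : R) (f f1 : R -> R) (t : R) :=
  2 * b - 2 * (a - 1) * vfun f f1 t / f t - (3 - 2 * c) * phif f f1 t - phif f f1 t / f t.

Lemma phi_der a b c t0 beta beta0 tm f f1 f2 : SOL a b c t0 beta beta0 tm f f1 f2 ->
  forall t, t0 < t -> Rbar_lt t tm ->
  is_derive (phif f f1) t (f1 t / (1 + f t) * Bf a b c f f1 t).
Proof.
  intros S t Ht Htm'. destruct (sol_basic _ _ _ _ _ _ _ _ _ _ S) as [D1 [D2 _]].
  destruct (sol_pos _ _ _ _ _ _ _ _ _ _ S) as [P1 P2].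
  assert (Hb := S_beta _ _ _ _ _ _ _ _ _ _ S). assert (Ht0 := S_t0 _ _ _ _ _ _ _ _ _ _ S).
  assert (Hode := S_ode _ _ _ _ _ _ _ _ _ _ S t (conj (Rlt_le _ _ Ht) Htm')).
  assert (Hf := P2 t (Rlt_le _ _ Ht) Htm'). assert (Hf1 := P1 t (Rlt_le _ _ Ht) Htm').
  unfold phif. auto_derive.
  - repeat split; try (eexists; apply D1; auto); try (eexists; apply D2; auto);
    apply Rgt_not_eq; repeat apply Rmult_lt_0_compat; lra.
  - rwD. rewrite (is_derive_unique _ _ _ (D2 t Ht Htm')).
    rewrite (is_derive_unique _ _ _ (D1 t Ht Htm')). rewrite Hode.
    unfold Bf, phif, vfun. field. repeat split; lra.
Qed.

Definition uf (f : R -> R) (t : R) := ln (1 + f t).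

Lemma uf_der a b c t0 beta beta0 tm f f1 f2 : SOL a b c t0 beta beta0 tm f f1 f2 ->
  forall t, t0 < t -> Rbar_lt t tm -> is_derive (uf f) t (f1 t / (1 + f t)).
Proof.
  intros S t Ht Htm'. destruct (sol_basic _ _ _ _ _ _ _ _ _ _ S) as [D1 _].
  destruct (sol_pos _ _ _ _ _ _ _ _ _ _ S) as [P1 P2].
  assert (Hb := S_beta _ _ _ _ _ _ _ _ _ _ S).
  assert (Hf := P2 t (Rlt_le _ _ Ht) Htm').
  unfold uf. auto_derive.
  - split. eexists; apply D1; auto. split; auto. lra.
  - rwD. rewrite (is_derive_unique _ _ _ (D1 t Ht Htm')). field. lra.
Qed.

Lemma Lam_der a b c t0 beta beta0 tm f f1 f2 theta A : SOL a b c t0 beta beta0 tm f f1 f2 ->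
  forall t, t0 < t -> Rbar_lt t tm ->
  is_derive (Lam theta A t0 f f1) t (theta * A * hhe t0 f f1 t - f1 t / (1 + f t)).
Proof.
  intros S t Ht Htm'. destruct (sol_basic _ _ _ _ _ _ _ _ _ _ S) as [D1 _].
  destruct (sol_pos _ _ _ _ _ _ _ _ _ _ S) as [P1 P2].
  assert (Hb := S_beta _ _ _ _ _ _ _ _ _ _ S).
  assert (Hf := P2 t (Rlt_le _ _ Ht) Htm').
  assert (HG := sol_G _ _ _ _ _ _ _ _ _ _ S t Htm').
  unfold Lam. auto_derive.
  - split. eexists; exact HG. split. eexists; apply D1; auto. split; auto. lra.
  - rwD. rewrite (is_derive_unique _ _ _ (D1 t Ht Htm')), (is_derive_unique _ _ _ HG).
    field. lra.
Qed.

Lemma Bbound (a b c F V k'' d0 eps : R) :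
  1 < a -> 0 < d0 -> 0 < k'' -> 0 < eps -> 0 < F -> 0 <= V ->
  2 * b - (3 - 2 * c) * k'' = 2 * d0 -> 2 * (a - 1) * eps = d0 / 2 ->
  k'' / F <= d0 / 2 -> k'' / F <= eps ^ 2 -> c < 3/2 ->
  V ^ 2 / F <= k'' ->
  d0 <= 2 * b - 2 * (a - 1) * V / F - (3 - 2 * c) * (V ^ 2 / F) - (V ^ 2 / F) / F.
Proof.
  intros Ha Hd Hk He HF HV E1 E2 H1 H2 Hc HP.
  set (P := V ^ 2 / F) in *.
  assert (HP0 : 0 <= P) by (unfold P; apply Rdiv_le_0_compat; nra).
  assert (HPF : P / F <= d0 / 2).
  { apply Rle_trans with (k'' / F); auto. unfold Rdiv. apply Rmult_le_compat_r.
    left; apply Rinv_0_lt_compat; lra. lra. }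
  assert (HVF : (V / F) ^ 2 <= eps ^ 2).
  { replace ((V / F) ^ 2) with (P / F) by (unfold P; field; lra).
    apply Rle_trans with (k'' / F); auto. unfold Rdiv. apply Rmult_le_compat_r.
    left; apply Rinv_0_lt_compat; lra. lra. }
  assert (HVF0 : 0 <= V / F) by (apply Rdiv_le_0_compat; lra).
  assert (HVe : V / F <= eps) by nra.
  assert (2 * (a - 1) * V / F = 2 * (a - 1) * (V / F)) by (field; lra).
  assert ((3 - 2 * c) * P <= (3 - 2 * c) * k'') by (apply Rmult_le_compat_l; lra).
  assert (2 * (a - 1) * (V / F) <= 2 * (a - 1) * eps) by (apply Rmult_le_compat_l; lra).
  lra.
Qed.

Lemma mono2 (T : R) (tm : Rbar) (w w' u u' : R -> R) (k : R) :
  Rbar_lt T tm ->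
  (forall t, T <= t -> Rbar_lt t tm -> is_derive w t (w' t)) ->
  (forall t, T <= t -> Rbar_lt t tm -> is_derive u t (u' t)) ->
  (forall t, T < t -> Rbar_lt t tm -> k * u' t <= w' t) ->
  forall t, T <= t -> Rbar_lt t tm -> w T + k * (u t - u T) <= w t.
Proof.
  intros HT Hw Hu Hk t Ht Htm'.
  assert (H : (fun s => w s - k * u s) T <= (fun s => w s - k * u s) t).
  { refine (mono T tm (fun s => w s - k * u s) (fun s => w' s - k * u' s) HT _ _ _ t Ht Htm').
    - apply cont_rcont. apply cR_minus.
      apply (ex_derive_continuous (K:=R_AbsRing) (V:=R_NormedModule)). eexists; apply Hw; auto; lra.
      apply (cR_mult (fun _ => k)). apply cR_const.
      apply (ex_derive_continuous (K:=R_AbsRing) (V:=R_NormedModule)). eexists; apply Hu; auto; lra.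
    - intros s Hs1 Hs2. assert (H1 := Hw s (Rlt_le _ _ Hs1) Hs2).
      assert (H2 := Hu s (Rlt_le _ _ Hs1) Hs2). auto_derive.
      split; [eexists; exact H1 | split; [eexists; exact H2| auto]].
      rwD. rewrite (is_derive_unique _ _ _ H1), (is_derive_unique _ _ _ H2). ring.
    - intros s Hs1 Hs2. specialize (Hk s Hs1 Hs2). lra. }
  simpl in H. lra.
Qed.

Lemma div_le_l (k x F : R) : 0 < F -> k <= x * F -> k / F <= x.
Proof. intros HF H. apply Rmult_le_reg_r with F; auto. unfold Rdiv. rewrite Rmult_assoc, Rinv_l by lra. lra. Qed.

Lemma FI_ev (t0 : R) (tm : Rbar) (f : R -> R) :
  Rbar_lt t0 tm -> filterlim f (to_left tm) (Rbar_locally p_infty) ->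
  forall M, exists T, t0 < T /\ Rbar_lt T tm /\ forall s, T <= s -> Rbar_lt s tm -> M < f s.
Proof.
  intros Htm FI M. apply to_left_ev; auto. apply FI. exists M. auto.
Qed.

Lemma eta_main a b c t0 beta beta0 tm f f1 f2 theta A :
  SOL a b c t0 beta beta0 tm f f1 f2 ->
  1 <= theta -> 0 < A -> A * theta < 2 * b / (3 - 2 * c) ->
  filterlim f (to_left tm) (Rbar_locally p_infty) ->
  (exists Cstar : R, 0 < Cstar /\
     forall t, Ico t0 tm t -> 0 < eta A theta t0 f t /\ eta A theta t0 f t <= Cstar) /\
  filterlim (eta A theta t0 f) (to_left tm) (locally 0).
Proof.
  intros S Hth HA Hk FI.
  destruct (sol_basic _ _ _ _ _ _ _ _ _ _ S) as [D1 [D2 [C2 [R0 [R1 R2]]]]].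
  destruct (sol_pos _ _ _ _ _ _ _ _ _ _ S) as [P1 P2].
  assert (Ha := S_a _ _ _ _ _ _ _ _ _ _ S). assert (Hb := S_b _ _ _ _ _ _ _ _ _ _ S).
  assert (Hc1 := S_c1 _ _ _ _ _ _ _ _ _ _ S). assert (Hc2 := S_c2 _ _ _ _ _ _ _ _ _ _ S).
  assert (Ht0 := S_t0 _ _ _ _ _ _ _ _ _ _ S). assert (Hbe := S_beta _ _ _ _ _ _ _ _ _ _ S).
  assert (Htm := S_tm _ _ _ _ _ _ _ _ _ _ S).
  set (k := A * theta) in *. set (ps := 2 * b / (3 - 2 * c)) in *.
  assert (H32 : 0 < 3 - 2 * c) by lra.
  assert (Hk0 : 0 < k) by (unfold k; nra).
  assert (Hps : (3 - 2 * c) * ps = 2 * b) by (unfold ps; field; lra).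
  set (k' := (k + ps) / 2). set (k'' := (k' + ps) / 2).
  set (d0 := (2 * b - (3 - 2 * c) * k'') / 2).
  assert (Hd0 : 0 < d0).
  { unfold d0, k'', k'. assert ((3 - 2 * c) * k < (3 - 2 * c) * ps) by (apply Rmult_lt_compat_l; lra).
    lra. }
  assert (Hk'' : 0 < k'') by (unfold k'', k'; lra).
  set (eps := d0 / (4 * (a - 1))).
  assert (Heps : 0 < eps) by (unfold eps; apply Rdiv_lt_0_compat; lra).
  assert (Heps2 : 2 * (a - 1) * eps = d0 / 2) by (unfold eps; field; lra).
  set (F0 := Rmax 1 (Rmax (2 * k'' / d0) (k'' / eps ^ 2))).
  assert (HF01 : 1 <= F0) by apply Rmax_l.
  assert (HF02 : 2 * k'' / d0 <= F0) by (eapply Rle_trans; [apply Rmax_l|apply Rmax_r]).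
  assert (HF03 : k'' / eps ^ 2 <= F0) by (eapply Rle_trans; [apply Rmax_r|apply Rmax_r]).
  assert (KB : forall t, t0 < t -> Rbar_lt t tm -> F0 <= f t -> phif f f1 t <= k'' ->
             d0 <= Bf a b c f f1 t).
  { intros t Ht Htm' HF Hp.
    assert (Hf := P2 t (Rlt_le _ _ Ht) Htm'). assert (Hf1 := P1 t (Rlt_le _ _ Ht) Htm').
    assert (Hpv : phif f f1 t = vfun f f1 t ^ 2 / f t).
    { unfold phif, vfun. field. lra. }
    unfold Bf. rewrite Hpv in *.
    apply (Bbound a b c (f t) (vfun f f1 t) k'' d0 eps); auto; try lra.
    - unfold vfun. apply Rdiv_le_0_compat; nra.
    - unfold d0; lra.
    - apply div_le_l. lra. assert (2 * k'' / d0 * d0 = 2 * k'') by (field; lra).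
      assert (2 * k'' / d0 * d0 <= F0 * d0) by (apply Rmult_le_compat_r; lra). nra.
    - apply div_le_l. lra. assert (k'' / eps ^ 2 * eps ^ 2 = k'') by (field; lra).
      assert (0 < eps ^ 2) by (apply pow_lt; lra).
      assert (k'' / eps ^ 2 * eps ^ 2 <= F0 * eps ^ 2) by (apply Rmult_le_compat_r; lra). nra. }
  destruct (FI_ev t0 tm f Htm FI F0) as [T1 [HT1 [HT1tm HT1f]]].
  assert (Dphi := phi_der _ _ _ _ _ _ _ _ _ _ S).
  assert (Du := uf_der _ _ _ _ _ _ _ _ _ _ S).
  assert (DL := Lam_der _ _ _ _ _ _ _ _ _ _ theta A S).
  assert (Hu' : forall t, t0 < t -> Rbar_lt t tm -> 0 < f1 t / (1 + f t)).
  { intros t Ht Htm'. apply Rdiv_lt_0_compat. apply P1; auto; lra.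
    generalize (P2 t (Rlt_le _ _ Ht) Htm'); lra. }
  assert (Hphi0 : forall t, t0 < t -> Rbar_lt t tm -> 0 < phif f f1 t).
  { intros t Ht Htm'. assert (Hf := P2 t (Rlt_le _ _ Ht) Htm').
    assert (Hf1 := P1 t (Rlt_le _ _ Ht) Htm'). unfold phif.
    apply Rdiv_lt_0_compat. apply Rmult_lt_0_compat; apply pow_lt; lra.
    apply Rmult_lt_0_compat. apply pow_lt; lra. lra. }
  assert (HT2 : exists T2, T1 <= T2 /\ Rbar_lt T2 tm /\ k'' < phif f f1 T2).
  { apply NNPP. intro Hn.
    assert (Hle : forall t, T1 <= t -> Rbar_lt t tm -> phif f f1 t <= k'').
    { intros t Ht Htm'. apply Rnot_lt_le. intro Hlt. apply Hn. exists t. auto. }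
    assert (Hg : forall t, T1 <= t -> Rbar_lt t tm ->
               phif f f1 T1 + d0 * (uf f t - uf f T1) <= phif f f1 t).
    { apply (mono2 T1 tm (phif f f1) (fun t => f1 t / (1 + f t) * Bf a b c f f1 t)
               (uf f) (fun t => f1 t / (1 + f t)) d0); auto.
      - intros t Ht Htm'. apply Dphi; auto. lra.
      - intros t Ht Htm'. apply Du; auto. lra.
      - intros t Ht Htm'.
        assert (d0 <= Bf a b c f f1 t).
        { apply KB; auto. lra. left. apply HT1f; auto; lra. apply Hle; auto; lra. }
        assert (0 < f1 t / (1 + f t)) by (apply Hu'; auto; lra). nra. }
    assert (Hp1 : 0 < phif f f1 T1) by (apply Hphi0; auto).
    set (M := exp (uf f T1 + (k'' + 1) / d0)).
    destruct (FI_ev t0 tm f Htm FI M) as [T3 [HT3 [HT3tm HT3f]]].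
    set (t := Rmax T1 T3).
    assert (Htt1 : T1 <= t) by apply Rmax_l. assert (Htt3 : T3 <= t) by apply Rmax_r.
    assert (Httm : Rbar_lt t tm).
    { unfold t, Rmax. destruct (Rle_dec T1 T3); auto. }
    assert (HM : M < f t) by auto.
    assert (HMp : 0 < M) by apply exp_pos.
    assert (Hut : uf f T1 + (k'' + 1) / d0 < uf f t).
    { rewrite <- (ln_exp (uf f T1 + (k'' + 1) / d0)). fold M. unfold uf. apply ln_increasing.
      auto. lra. }
    specialize (Hg t Htt1 Httm). specialize (Hle t Htt1 Httm).
    assert (d0 * ((k'' + 1) / d0) = k'' + 1) by (field; lra).
    assert (d0 * ((k'' + 1) / d0) < d0 * (uf f t - uf f T1)) by (apply Rmult_lt_compat_l; lra).
    lra. }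
  destruct HT2 as [T2 [HT2a [HT2b HT2c]]].
  assert (HT2t0 : t0 < T2) by lra.
  assert (Hphi : forall t, T2 <= t -> Rbar_lt t tm -> k' < phif f f1 t).
  { apply (barrier T2 tm (phif f f1) (fun t => f1 t / (1 + f t) * Bf a b c f f1 t) k'); auto.
    - apply cont_rcont. apply (ex_derive_continuous (K:=R_AbsRing) (V:=R_NormedModule)).
      eexists; apply Dphi; auto.
    - intros t Ht Htm'. apply Dphi; auto. lra.
    - assert (k' < k'') by (unfold k'', k'; lra). lra.
    - intros t Ht Htm' _ Heq.
      assert (d0 <= Bf a b c f f1 t).
      { apply KB; auto. lra. left. apply HT1f; auto; lra. rewrite Heq. unfold k''. unfold k'. lra. }
      assert (0 < f1 t / (1 + f t)) by (apply Hu'; auto; lra).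
      apply Rmult_lt_0_compat; lra. }
  set (eps1 := 1 - k / k').
  assert (Hk' : 0 < k') by (unfold k'; lra).
  assert (Hkk : k < k') by (unfold k'; lra).
  assert (Heps1 : 0 < eps1).
  { unfold eps1. assert (k / k' < 1). { apply Rmult_lt_reg_r with k'; auto.
      unfold Rdiv. rewrite Rmult_assoc, Rinv_l by lra. lra. } lra. }
  assert (HL : forall t, T2 <= t -> Rbar_lt t tm ->
             Lam theta A t0 f f1 t + eps1 * (uf f t - uf f T2) <= Lam theta A t0 f f1 T2).
  { intros t Ht Htm'.
    assert (H := mono2 T2 tm (fun s => - Lam theta A t0 f f1 s)
       (fun s => - (theta * A * hhe t0 f f1 s - f1 s / (1 + f s)))
       (uf f) (fun s => f1 s / (1 + f s)) eps1 HT2b).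
    simpl in H. assert (H' : - Lam theta A t0 f f1 T2 + eps1 * (uf f t - uf f T2) <= - Lam theta A t0 f f1 t).
    2: lra.
    apply H; auto.
    - intros s Hs1 Hs2. assert (H1 := DL s ltac:(lra) Hs2). auto_derive.
      eexists; exact H1. rwD. rewrite (is_derive_unique _ _ _ H1). ring.
    - intros s Hs1 Hs2. apply Du; auto. lra.
    - intros s Hs1 Hs2.
      assert (Hf := P2 s (Rlt_le _ _ (Rlt_le_trans _ _ _ HT2t0 (Rlt_le _ _ Hs1))) Hs2).
      assert (Hf1 := P1 s (Rlt_le _ _ (Rlt_le_trans _ _ _ HT2t0 (Rlt_le _ _ Hs1))) Hs2).
      assert (Hpss := Hphi s (Rlt_le _ _ Hs1) Hs2).
      assert (Hh : hhe t0 f f1 s = (f1 s / (1 + f s)) / phif f f1 s).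
      { unfold hhe, fe, phif. rewrite Rmax_left by lra. field. repeat split; lra. }
      rewrite Hh. replace (theta * A) with k by (unfold k; ring).
      set (up := f1 s / (1 + f s)) in *. set (ph := phif f f1 s) in *.
      assert (Hup : 0 < up) by (unfold up; apply Rdiv_lt_0_compat; lra).
      assert (up / ph <= up / k').
      { unfold Rdiv. apply Rmult_le_compat_l. lra. apply Rinv_le_contravar; lra. }
      assert (k * (up / ph) <= k * (up / k')) by (apply Rmult_le_compat_l; lra).
      assert (k * (up / k') = (1 - eps1) * up) by (unfold eps1; field; lra).
      lra. }
  assert (Hum : forall t, T2 <= t -> Rbar_lt t tm -> uf f T2 <= uf f t).
  { apply (mono T2 tm (uf f) (fun s => f1 s / (1 + f s))); auto.
    - apply cont_rcont. apply (ex_derive_continuous (K:=R_AbsRing) (V:=R_NormedModule)).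
      eexists; apply Du; auto.
    - intros s Hs1 Hs2. apply Du; auto. lra.
    - intros s Hs1 Hs2. left. apply Hu'; auto. lra. }
  assert (Hu0 : forall t, t0 <= t -> Rbar_lt t tm -> 0 <= uf f t).
  { intros t Ht Htm'. unfold uf. rewrite <- ln_1. apply ln_le. lra.
    generalize (P2 t Ht Htm'); lra. }
  assert (HGm : forall t, t0 <= t -> t <= T2 -> Gf t0 f f1 t <= Gf t0 f f1 T2).
  { intros t Ht HtT. destruct (Rle_lt_or_eq_dec _ _ HtT) as [h|h]; [|rewrite h; lra].
    apply (mono_closed t T2 (Gf t0 f f1) (hhe t0 f f1)); auto.
    - apply cont_rcont. apply (ex_derive_continuous (K:=R_AbsRing) (V:=R_NormedModule)).
      eexists; apply (sol_G _ _ _ _ _ _ _ _ _ _ S). apply lt_tm with T2; [lra | exact HT2b].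
    - intros s Hs. apply (sol_G _ _ _ _ _ _ _ _ _ _ S). apply lt_tm with T2; [lra | exact HT2b].
    - intros s Hs. left. apply (sol_hhe _ _ _ _ _ _ _ _ _ _ S). apply lt_tm with T2; [lra | exact HT2b]. }
  assert (HLb : forall t, t0 <= t -> Rbar_lt t tm -> Lam theta A t0 f f1 t <= k * Gf t0 f f1 T2).
  { intros t Ht Htm'. destruct (Rle_or_lt t T2) as [h|h].
    - unfold Lam. replace (theta * A) with k by (unfold k; ring).
      assert (Gf t0 f f1 t <= Gf t0 f f1 T2) by auto.
      assert (k * Gf t0 f f1 t <= k * Gf t0 f f1 T2) by (apply Rmult_le_compat_l; lra).
      assert (0 <= uf f t) by auto. unfold uf in *. lra.
    - assert (H1 := HL t (Rlt_le _ _ h) Htm'). assert (H2 := Hum t (Rlt_le _ _ h) Htm').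
      assert (H3 : Lam theta A t0 f f1 T2 <= k * Gf t0 f f1 T2).
      { unfold Lam. replace (theta * A) with k by (unfold k; ring).
        assert (0 <= uf f T2) by (apply Hu0; auto; lra). unfold uf in *. lra. }
      assert (0 <= eps1 * (uf f t - uf f T2)) by (apply Rmult_le_pos; lra). lra. }
  split.
  - exists (exp (k * Gf t0 f f1 T2)). split. apply exp_pos.
    intros t [Ht Htm']. rewrite (eta_eq _ _ _ _ _ _ _ _ _ _ _ _ S t Ht Htm').
    split. apply exp_pos.
    destruct (Rle_lt_or_eq_dec _ _ (HLb t Ht Htm')) as [h|h].
    left; apply exp_increasing; auto. rewrite h; lra.
  - apply filterlim_locally. intros e.
    set (U := (Lam theta A t0 f f1 T2 + eps1 * uf f T2 - ln e) / eps1).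
    assert (F1 : to_left tm (fun t => exp U < f t)). { apply FI. exists (exp U). auto. }
    assert (F2 : to_left tm (fun t => T2 <= t /\ Rbar_lt t tm)).
    { apply (to_left_of T2); auto. }
    generalize (filter_and _ _ F1 F2). apply filter_imp.
    intros t [Hft [Ht Htm']].
    change (Rabs (eta A theta t0 f t - 0) < e).
    rewrite (eta_eq _ _ _ _ _ _ _ _ _ _ _ _ S t (Rle_trans _ _ _ (Rlt_le _ _ HT2t0) Ht) Htm').
    rewrite Rminus_0_r, Rabs_right by (left; apply exp_pos).
    assert (He : 0 < e) by apply cond_pos.
    rewrite <- (exp_ln e) by auto. apply exp_increasing.
    assert (HuU : U < uf f t).
    { rewrite <- (ln_exp U). unfold uf. apply ln_increasing. apply exp_pos. lra. }
    assert (H1 := HL t Ht Htm').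
    assert (eps1 * U < eps1 * uf f t) by (apply Rmult_lt_compat_l; auto).
    assert (eps1 * U = Lam theta A t0 f f1 T2 + eps1 * uf f T2 - ln e) by (unfold U; field; lra).
    lra.
Qed.

Lemma le_eps (x y : R) : (forall e, 0 < e -> x < y + e) -> x <= y.
Proof.
  intros H. destruct (Rle_or_lt x y) as [h|h]; auto.
  specialize (H ((x - y)/2)). lra.
Qed.

Lemma half_pow_small (C e : R) : 0 < e -> exists N, forall n, (n >= N)%nat -> C * (/2) ^ n < e.
Proof.
  intros He. destruct (Rle_or_lt C 0) as [hC|hC].
  - exists 0%nat. intros n _. assert (0 < (/2)^n) by (apply pow_lt; lra). nra.
  - assert (Hy : 0 < e / C) by (apply Rdiv_lt_0_compat; lra).
    destruct (pow_lt_1_zero (/2) ltac:(rewrite Rabs_right; lra) (e / C) Hy) as [N HN].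
    exists N. intros n Hn. specialize (HN n Hn).
    assert (0 < (/2)^n) by (apply pow_lt; lra).
    rewrite Rabs_right in HN by lra.
    assert (C * (/2)^n < C * (e / C)) by (apply Rmult_lt_compat_l; lra).
    replace (C * (e / C)) with e in H0 by (field; lra). exact H0.
Qed.

Lemma zero_of_half (z C : R) : (forall n, Rabs z <= C * (/2) ^ n) -> z = 0.
Proof.
  intros H. destruct (Req_dec z 0) as [h|h]; auto. exfalso.
  assert (Hz : 0 < Rabs z) by (apply Rabs_pos_lt; auto).
  destruct (half_pow_small C (Rabs z) Hz) as [N HN].
  specialize (HN N (le_n N)). specialize (H N). lra.
Qed.

Lemma RInt_minusR (f g : R -> R) a b : ex_RInt f a b -> ex_RInt g a b ->
  RInt (fun x => f x - g x) a b = RInt f a b - RInt g a b.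
Proof. intros. exact (RInt_minus f g a b H H0). Qed.

Lemma ex_RInt_minusR (f g : R -> R) a b : ex_RInt f a b -> ex_RInt g a b ->
  ex_RInt (fun x => f x - g x) a b.
Proof. intros. exact (ex_RInt_minus f g a b H H0). Qed.

Lemma ex_RInt_cont (g : R -> R) (a t : R) :
  (forall s, Rmin a t <= s <= Rmax a t -> continuous g s) -> ex_RInt g a t.
Proof. intros H. apply (ex_RInt_continuous (V:=R_CompleteNormedModule)). exact H. Qed.

Lemma RInt_abs_bound (g : R -> R) (a t B : R) :
  (forall s, Rmin a t <= s <= Rmax a t -> continuous g s) ->
  (forall s, Rmin a t <= s <= Rmax a t -> Rabs (g s) <= B) ->
  Rabs (RInt g a t) <= Rabs (t - a) * B.
Proof.
  intros Hc Hb. assert (He := ex_RInt_cont g a t Hc).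
  destruct (Rle_or_lt a t) as [h|h].
  - rewrite (Rabs_right (t - a)) by lra. apply abs_RInt_le_const; auto.
    intros s Hs. apply Hb. rewrite Rmin_left, Rmax_right by lra; lra.
  - rewrite <- (opp_RInt_swap g t a).
    2: { apply ex_RInt_swap. exact He. }
    change (Rabs (- RInt g t a) <= Rabs (t - a) * B). rewrite Rabs_Ropp.
    rewrite (Rabs_left (t - a)) by lra. replace (- (t - a)) with (a - t) by ring.
    apply abs_RInt_le_const. lra. apply ex_RInt_swap; auto.
    intros s Hs. apply Hb. rewrite Rmin_right, Rmax_left by lra; lra.
Qed.

Lemma RInt_der (g : R -> R) (a : R) : (forall x, continuous g x) ->
  forall t, is_derive (fun t => RInt g a t) t (g t).
Proof.
  intros Hc t. apply (is_derive_RInt _ _ a). 2: apply Hc.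
  apply locally_R. exists 1. split. lra. intros y _. apply RInt_correct.
  apply ex_RInt_cont. intros; apply Hc.
Qed.

Lemma RInt_der_loc (g : R -> R) (a t d : R) : 0 < d -> Rabs (t - a) < d ->
  (forall x, Rabs (x - a) < d -> continuous g x) ->
  is_derive (fun t => RInt g a t) t (g t).
Proof.
  intros Hd Ht Hc. apply (is_derive_RInt _ _ a). 2: apply Hc; auto.
  apply locally_R. exists (d - Rabs (t - a)). split. lra. intros y Hy. apply RInt_correct.
  apply ex_RInt_cont. intros s Hs. apply Hc.
  apply Rabs_def2 in Hy. destruct Hs as [Hs1 Hs2].
  assert (Hm1 : Rmin a y <= a) by apply Rmin_l. assert (Hm2 : Rmin a y <= y) by apply Rmin_r.
  assert (Hm3 : a <= Rmax a y) by apply Rmax_l. assert (Hm4 : y <= Rmax a y) by apply Rmax_r.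
  assert (Hm5 : Rmin a y = a \/ Rmin a y = y).
  { unfold Rmin. destruct (Rle_dec a y); auto. }
  assert (Hm6 : Rmax a y = a \/ Rmax a y = y).
  { unfold Rmax. destruct (Rle_dec a y); auto. }
  apply Rabs_def1; split_Rabs; lra.
Qed.

Lemma addK (a J : R) : a + J - a = J.
Proof. ring. Qed.

Lemma addD (a J K : R) : a + J - (a + K) = J - K.
Proof. ring. Qed.

Fixpoint Pic (Fc : R -> R -> R -> R) (tau x0 y0 : R) (n : nat) : (R -> R) * (R -> R) :=
  match n with
  | O => (fun _ => x0, fun _ => y0)
  | S n => (fun t => x0 + RInt (snd (Pic Fc tau x0 y0 n)) tau t,
            fun t => y0 + RInt (fun s => Fc s (fst (Pic Fc tau x0 y0 n) s)
                                             (snd (Pic Fc tau x0 y0 n) s)) tau t)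
  end.

Definition PicHyp (Fc : R -> R -> R -> R) (MF Lp : R) : Prop :=
  (forall g1 g2 t, continuous g1 t -> continuous g2 t ->
     continuous (fun s => Fc s (g1 s) (g2 s)) t) /\
  (forall t x y, Rabs (Fc t x y) <= MF) /\
  (forall t x y x' y', Rabs (Fc t x y - Fc t x' y') <= Lp * (Rabs (x - x') + Rabs (y - y'))).

Lemma pic_cont Fc MF Lp tau x0 y0 : PicHyp Fc MF Lp ->
  forall n t, continuous (fst (Pic Fc tau x0 y0 n)) t /\ continuous (snd (Pic Fc tau x0 y0 n)) t.
Proof.
  intros [HC [HB HL]] n. induction n as [|n IH]; intros t; simpl.
  - split; apply cR_const.
  - split.
    + apply cR_plus. apply cR_const.
      apply (ex_derive_continuous (K:=R_AbsRing) (V:=R_NormedModule)). eexists.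
      apply RInt_der. intros x; apply IH.
    + apply cR_plus. apply cR_const.
      apply (ex_derive_continuous (K:=R_AbsRing) (V:=R_NormedModule)). eexists.
      apply RInt_der. intros x. apply HC; apply IH.
Qed.

Lemma seg_le (tau t s d : R) : Rmin tau t <= s <= Rmax tau t -> Rabs (t - tau) <= d ->
  Rabs (s - tau) <= Rabs (t - tau) /\ Rabs (s - tau) <= d.
Proof.
  intros [H1 H2] H.
  assert (Hm5 : Rmin tau t = tau /\ Rmax tau t = t \/ Rmin tau t = t /\ Rmax tau t = tau).
  { unfold Rmin, Rmax. destruct (Rle_dec tau t); auto. }
  destruct Hm5 as [[E1 E2]|[E1 E2]]; rewrite E1, E2 in *; split; split_Rabs; lra.
Qed.

Lemma pic_diff Fc MF Lp tau x0 y0 d : PicHyp Fc MF Lp -> 0 < d -> d <= 1 -> 0 <= Lp ->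
  d * (1 + Lp) <= /2 ->
  forall n t, Rabs (t - tau) <= d ->
  Rabs (fst (Pic Fc tau x0 y0 (S n)) t - fst (Pic Fc tau x0 y0 n) t) +
  Rabs (snd (Pic Fc tau x0 y0 (S n)) t - snd (Pic Fc tau x0 y0 n) t)
  <= (Rabs y0 + MF) * (/2) ^ n.
Proof.
  intros HP Hd Hd1 HLp HdL. assert (HC := pic_cont _ _ _ tau x0 y0 HP).
  destruct HP as [HFC [HB HL]].
  induction n as [|n IH]; intros t Ht.
  - simpl. assert (E : RInt (fun _ => y0) tau t = (t - tau) * y0) by (rewrite RInt_const; reflexivity).
    rewrite E.
    replace (x0 + (t - tau) * y0 - x0) with ((t - tau) * y0) by ring.
    rewrite addK.
    rewrite Rabs_mult.
    assert (Rabs (RInt (fun s : R => Fc s x0 y0) tau t) <= Rabs (t - tau) * MF).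
    { apply RInt_abs_bound. intros; apply HFC; apply cR_const. intros; apply HB. }
    assert (0 <= MF) by (eapply Rle_trans; [apply Rabs_pos|apply (HB 0 0 0)]).
    assert (Rabs (t - tau) * Rabs y0 <= 1 * Rabs y0) by (apply Rmult_le_compat_r; [apply Rabs_pos|lra]).
    assert (Rabs (t - tau) * MF <= 1 * MF) by (apply Rmult_le_compat_r; lra). lra.
  - set (P1 := fst (Pic Fc tau x0 y0 (S n))). set (Q1 := snd (Pic Fc tau x0 y0 (S n))).
    set (P0 := fst (Pic Fc tau x0 y0 n)). set (Q0 := snd (Pic Fc tau x0 y0 n)).
    change (fst (Pic Fc tau x0 y0 (S (S n))) t) with (x0 + RInt Q1 tau t).
    change (snd (Pic Fc tau x0 y0 (S (S n))) t) with (y0 + RInt (fun s => Fc s (P1 s) (Q1 s)) tau t).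
    change (P1 t) with (x0 + RInt Q0 tau t).
    change (Q1 t) with (y0 + RInt (fun s => Fc s (P0 s) (Q0 s)) tau t).
    assert (HcP1 : forall x, continuous P1 x) by (intros; apply HC).
    assert (HcQ1 : forall x, continuous Q1 x) by (intros; apply HC).
    assert (HcP0 : forall x, continuous P0 x) by (intros; apply HC).
    assert (HcQ0 : forall x, continuous Q0 x) by (intros; apply HC).
    rewrite !addD.
    rewrite <- (RInt_minusR Q1 Q0) by (apply ex_RInt_cont; auto).
    rewrite <- (RInt_minusR (fun s => Fc s (P1 s) (Q1 s)) (fun s => Fc s (P0 s) (Q0 s)))
      by (apply ex_RInt_cont; intros; apply HFC; auto).
    set (B := (Rabs y0 + MF) * (/2) ^ n).
    assert (H1 : Rabs (RInt (fun s => Q1 s - Q0 s) tau t) <= Rabs (t - tau) * B).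
    { apply RInt_abs_bound. intros; apply cR_minus; auto.
      intros s Hs. destruct (seg_le tau t s d Hs Ht) as [_ Hs2]. specialize (IH s Hs2).
      fold P1 Q1 P0 Q0 in IH. generalize (Rabs_pos (P1 s - P0 s)). unfold B. lra. }
    assert (H2 : Rabs (RInt (fun s => Fc s (P1 s) (Q1 s) - Fc s (P0 s) (Q0 s)) tau t)
                 <= Rabs (t - tau) * (Lp * B)).
    { apply RInt_abs_bound. intros; apply cR_minus; apply HFC; auto.
      intros s Hs. destruct (seg_le tau t s d Hs Ht) as [_ Hs2]. specialize (IH s Hs2).
      fold P1 Q1 P0 Q0 in IH. eapply Rle_trans. apply HL. apply Rmult_le_compat_l; auto. }
    assert (HB0 : 0 <= B). { unfold B. apply Rmult_le_pos.
      assert (0 <= MF) by (eapply Rle_trans; [apply Rabs_pos|apply (HB 0 0 0)]).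
      generalize (Rabs_pos y0); lra. apply pow_le; lra. }
    assert (Rabs (t - tau) * B + Rabs (t - tau) * (Lp * B) <= d * (1 + Lp) * B).
    { replace (Rabs (t - tau) * B + Rabs (t - tau) * (Lp * B)) with (Rabs (t - tau) * ((1 + Lp) * B)) by ring.
      replace (d * (1 + Lp) * B) with (d * ((1 + Lp) * B)) by ring.
      apply Rmult_le_compat_r; auto. apply Rmult_le_pos; lra. }
    assert (d * (1 + Lp) * B <= /2 * B) by (apply Rmult_le_compat_r; auto).
    simpl. replace ((Rabs y0 + MF) * (/ 2 * (/ 2) ^ n)) with (/2 * B) by (unfold B; ring). lra.
Qed.

Lemma pic_cauchy Fc MF Lp tau x0 y0 d : PicHyp Fc MF Lp -> 0 < d -> d <= 1 -> 0 <= Lp ->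
  d * (1 + Lp) <= /2 ->
  forall n k t, Rabs (t - tau) <= d ->
  Rabs (fst (Pic Fc tau x0 y0 (n + k)) t - fst (Pic Fc tau x0 y0 n) t) +
  Rabs (snd (Pic Fc tau x0 y0 (n + k)) t - snd (Pic Fc tau x0 y0 n) t)
  <= 2 * (Rabs y0 + MF) * ((/2) ^ n - (/2) ^ (n + k)).
Proof.
  intros HP Hd Hd1 HLp HdL n k t Ht. induction k as [|k IH].
  - rewrite Nat.add_0_r. rewrite !Rminus_diag, !Rabs_R0. lra.
  - assert (H := pic_diff Fc MF Lp tau x0 y0 d HP Hd Hd1 HLp HdL (n + k) t Ht).
    rewrite <- Nat.add_succ_r in H.
    set (a1 := fst (Pic Fc tau x0 y0 (n + S k)) t) in *.
    set (a2 := fst (Pic Fc tau x0 y0 (n + k)) t) in *.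
    set (a3 := fst (Pic Fc tau x0 y0 n) t) in *.
    set (b1 := snd (Pic Fc tau x0 y0 (n + S k)) t) in *.
    set (b2 := snd (Pic Fc tau x0 y0 (n + k)) t) in *.
    set (b3 := snd (Pic Fc tau x0 y0 n) t) in *.
    assert (Rabs (a1 - a3) <= Rabs (a1 - a2) + Rabs (a2 - a3)).
    { replace (a1 - a3) with ((a1 - a2) + (a2 - a3)) by ring. apply Rabs_triang. }
    assert (Rabs (b1 - b3) <= Rabs (b1 - b2) + Rabs (b2 - b3)).
    { replace (b1 - b3) with ((b1 - b2) + (b2 - b3)) by ring. apply Rabs_triang. }
    assert (Hp : (/2)^(n + S k) = /2 * (/2)^(n+k)) by (rewrite Nat.add_succ_r; reflexivity).
    rewrite Hp. lra.
Qed.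

Lemma seq_lim_bound (u : nat -> R) (C : R) :
  (forall n k, Rabs (u (n + k)%nat - u n) <= C * (/2) ^ n) ->
  ex_finite_lim_seq u /\ forall n, Rabs (Lim_seq u - u n) <= C * (/2) ^ n.
Proof.
  intros H.
  assert (Hex : ex_finite_lim_seq u).
  { apply ex_lim_seq_cauchy_corr. intros e.
    destruct (half_pow_small C e (cond_pos e)) as [N HN]. exists N. intros n m Hn Hm.
    destruct (Nat.le_ge_cases n m) as [h|h].
    - replace m with (n + (m - n))%nat by lia. rewrite Rabs_minus_sym.
      eapply Rle_lt_trans. apply H. apply HN; lia.
    - replace n with (m + (n - m))%nat by lia.
      eapply Rle_lt_trans. apply H. apply HN; lia. }
  split; auto. intros n.
  assert (Hl := Lim_seq_correct' u Hex). apply is_lim_seq_spec in Hl.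
  apply le_eps. intros e He. destruct (Hl (mkposreal e He)) as [N HN].
  specialize (HN (n + N)%nat ltac:(lia)). simpl in HN. specialize (H n N).
  replace (Lim_seq u - u n) with ((Lim_seq u - u (n + N)%nat) + (u (n + N)%nat - u n)) by ring.
  eapply Rle_lt_trans. apply Rabs_triang. rewrite Rabs_minus_sym. lra.
Qed.

Definition pl Fc tau x0 y0 t : R := real (Lim_seq (fun n => fst (Pic Fc tau x0 y0 n) t)).
Definition ql Fc tau x0 y0 t : R := real (Lim_seq (fun n => snd (Pic Fc tau x0 y0 n) t)).

Lemma lim_approx (z w C : R) : (forall n, z <= w + C * (/2) ^ n) -> z <= w.
Proof.
  intros H. apply le_eps. intros e He. destruct (half_pow_small C e He) as [N HN].
  specialize (H N). specialize (HN N (le_n N)). lra.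
Qed.

Lemma MF_pos Fc MF Lp : PicHyp Fc MF Lp -> 0 <= MF.
Proof. intros [_ [HB _]]. eapply Rle_trans; [apply Rabs_pos|apply (HB 0 0 0)]. Qed.

Lemma pic_limb Fc MF Lp tau x0 y0 d : PicHyp Fc MF Lp -> 0 < d -> d <= 1 -> 0 <= Lp ->
  d * (1 + Lp) <= /2 -> forall t, Rabs (t - tau) <= d -> forall n0,
  Rabs (pl Fc tau x0 y0 t - fst (Pic Fc tau x0 y0 n0) t) <= 2 * (Rabs y0 + MF) * (/2) ^ n0 /\
  Rabs (ql Fc tau x0 y0 t - snd (Pic Fc tau x0 y0 n0) t) <= 2 * (Rabs y0 + MF) * (/2) ^ n0.
Proof.
  intros HP Hd Hd1 HLp HdL t Ht.
  assert (HC := pic_cauchy Fc MF Lp tau x0 y0 d HP Hd Hd1 HLp HdL).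
  assert (HM := MF_pos _ _ _ HP).
  assert (Hk : forall n k, 0 <= 2 * (Rabs y0 + MF) * (/2) ^ (n + k)).
  { intros. apply Rmult_le_pos. generalize (Rabs_pos y0); lra. apply pow_le; lra. }
  intros n0. split.
  - assert (B1 : forall n k, Rabs (fst (Pic Fc tau x0 y0 (n + k)) t - fst (Pic Fc tau x0 y0 n) t)
                    <= 2 * (Rabs y0 + MF) * (/2) ^ n).
    { intros n k. specialize (HC n k t Ht). specialize (Hk n k).
      generalize (Rabs_pos (snd (Pic Fc tau x0 y0 (n + k)) t - snd (Pic Fc tau x0 y0 n) t)).
      lra. }
    exact (proj2 (seq_lim_bound (fun n => fst (Pic Fc tau x0 y0 n) t) _ B1) n0).
  - assert (B1 : forall n k, Rabs (snd (Pic Fc tau x0 y0 (n + k)) t - snd (Pic Fc tau x0 y0 n) t)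
                    <= 2 * (Rabs y0 + MF) * (/2) ^ n).
    { intros n k. specialize (HC n k t Ht). specialize (Hk n k).
      generalize (Rabs_pos (fst (Pic Fc tau x0 y0 (n + k)) t - fst (Pic Fc tau x0 y0 n) t)).
      lra. }
    exact (proj2 (seq_lim_bound (fun n => snd (Pic Fc tau x0 y0 n) t) _ B1) n0).
Qed.

Lemma pic_iter_bounds Fc MF Lp tau x0 y0 d : PicHyp Fc MF Lp -> 0 < d -> d <= 1 ->
  forall n t, Rabs (t - tau) <= d ->
  Rabs (snd (Pic Fc tau x0 y0 n) t - y0) <= Rabs (t - tau) * MF /\
  Rabs (fst (Pic Fc tau x0 y0 n) t - x0) <= Rabs (t - tau) * (Rabs y0 + MF).
Proof.
  intros HP Hd Hd1. assert (HC := pic_cont _ _ _ tau x0 y0 HP).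
  assert (HM := MF_pos _ _ _ HP). destruct HP as [HFC [HB HL]].
  intros n t Ht. assert (Ha := Rabs_pos (t - tau)). assert (Hy := Rabs_pos y0). destruct n as [|n].
  - simpl. rewrite !Rminus_diag, !Rabs_R0. split; apply Rmult_le_pos; lra.
  - simpl. rewrite !addK. split.
    + apply RInt_abs_bound. intros; apply HFC; apply HC. intros; apply HB.
    + apply RInt_abs_bound. intros; apply HC. intros s Hs.
      destruct (seg_le tau t s d Hs Ht) as [_ Hs2].
      destruct n as [|n]. simpl. lra.
      change (snd (Pic Fc tau x0 y0 (S n)) s) with
        (y0 + RInt (fun s => Fc s (fst (Pic Fc tau x0 y0 n) s) (snd (Pic Fc tau x0 y0 n) s)) tau s).
      assert (Rabs (RInt (fun s => Fc s (fst (Pic Fc tau x0 y0 n) s) (snd (Pic Fc tau x0 y0 n) s)) tau s)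
              <= Rabs (s - tau) * MF).
      { apply RInt_abs_bound. intros; apply HFC; apply HC. intros; apply HB. }
      assert (Rabs (s - tau) * MF <= 1 * MF) by (apply Rmult_le_compat_r; lra).
      eapply Rle_trans. apply Rabs_triang. lra.
Qed.

Lemma chasR (g : R -> R) (a x s : R) : (forall z, continuous g z) ->
  RInt g a s - RInt g a x = RInt g x s.
Proof.
  intros Hc. rewrite <- (RInt_Chasles g a x s).
  change (RInt g a x + RInt g x s - RInt g a x = RInt g x s). ring.
  apply ex_RInt_cont; auto. apply ex_RInt_cont; auto.
Qed.

Lemma seg2 (tau x s z d : R) : Rmin x s <= z <= Rmax x s -> Rabs (x - tau) <= d ->
  Rabs (s - tau) <= d -> Rabs (z - tau) <= d.
Proof.
  intros [H1 H2] Hx Hs.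
  assert (Hm5 : Rmin x s = x /\ Rmax x s = s \/ Rmin x s = s /\ Rmax x s = x).
  { unfold Rmin, Rmax. destruct (Rle_dec x s); auto. }
  destruct Hm5 as [[E1 E2]|[E1 E2]]; rewrite E1, E2 in *; split_Rabs; lra.
Qed.

Lemma pic_lip Fc MF Lp tau x0 y0 d : PicHyp Fc MF Lp -> 0 < d -> d <= 1 ->
  forall n s x, Rabs (s - tau) <= d -> Rabs (x - tau) <= d ->
  Rabs (fst (Pic Fc tau x0 y0 n) s - fst (Pic Fc tau x0 y0 n) x) <= (Rabs y0 + MF) * Rabs (s - x) /\
  Rabs (snd (Pic Fc tau x0 y0 n) s - snd (Pic Fc tau x0 y0 n) x) <= MF * Rabs (s - x).
Proof.
  intros HP Hd Hd1. assert (HC := pic_cont _ _ _ tau x0 y0 HP).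
  assert (HIB := pic_iter_bounds _ _ _ tau x0 y0 d HP Hd Hd1).
  assert (HM := MF_pos _ _ _ HP). destruct HP as [HFC [HB HL]].
  intros n s x Hs Hx. assert (Ha := Rabs_pos (s - x)). assert (Hy := Rabs_pos y0).
  destruct n as [|n].
  - simpl. rewrite !Rminus_diag, !Rabs_R0. split; apply Rmult_le_pos; lra.
  - simpl. rewrite !addD. rewrite !chasR.
    2: { intros; apply HFC; apply HC. }
    2: { intros; apply HC. }
    rewrite (Rmult_comm _ (Rabs (s - x))), (Rmult_comm MF). split.
    + apply RInt_abs_bound. intros; apply HC. intros z Hz.
      assert (Hz' := seg2 tau x s z d Hz Hx Hs).
      destruct (HIB n z Hz') as [H1 _].
      assert (Rabs (z - tau) * MF <= 1 * MF) by (apply Rmult_le_compat_r; lra).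
      replace (snd (Pic Fc tau x0 y0 n) z) with ((snd (Pic Fc tau x0 y0 n) z - y0) + y0) by ring.
      eapply Rle_trans. apply Rabs_triang. lra.
    + apply RInt_abs_bound. intros; apply HFC; apply HC. intros; apply HB.
Qed.

Lemma is_derive_cplus (g : R -> R) (c t l : R) : is_derive g t l -> is_derive (fun s => c + g s) t l.
Proof.
  intros H. apply is_derive_Reals in H. apply is_derive_Reals.
  intros e He. destruct (H e He) as [d Hd]. exists d. intros h Hh0 Hh.
  replace ((c + g (t + h) - (c + g t)) / h - l) with ((g (t + h) - g t) / h - l) by (field; auto).
  apply Hd; auto.
Qed.

Lemma picard Fc MF Lp tau x0 y0 d : PicHyp Fc MF Lp -> 0 < d -> d <= 1 -> 0 <= Lp ->
  d * (1 + Lp) <= /2 ->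
  forall t, Rabs (t - tau) < d ->
   continuous (pl Fc tau x0 y0) t /\ continuous (ql Fc tau x0 y0) t /\
   is_derive (pl Fc tau x0 y0) t (ql Fc tau x0 y0 t) /\
   is_derive (ql Fc tau x0 y0) t (Fc t (pl Fc tau x0 y0 t) (ql Fc tau x0 y0 t)) /\
   Rabs (pl Fc tau x0 y0 t - x0) <= Rabs (t - tau) * (Rabs y0 + MF) /\
   Rabs (ql Fc tau x0 y0 t - y0) <= Rabs (t - tau) * MF /\
   pl Fc tau x0 y0 t = x0 + RInt (ql Fc tau x0 y0) tau t /\
   ql Fc tau x0 y0 t = y0 + RInt (fun s => Fc s (pl Fc tau x0 y0 s) (ql Fc tau x0 y0 s)) tau t.
Proof.
  intros HP Hd Hd1 HLp HdL.
  assert (HC := pic_cont _ _ _ tau x0 y0 HP).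
  assert (HIB := pic_iter_bounds _ _ _ tau x0 y0 d HP Hd Hd1).
  assert (HLIP := pic_lip _ _ _ tau x0 y0 d HP Hd Hd1).
  assert (LB := pic_limb _ _ _ tau x0 y0 d HP Hd Hd1 HLp HdL).
  assert (HM := MF_pos _ _ _ HP).
  destruct HP as [HFC [HB HL]].
  set (p := pl Fc tau x0 y0). set (q := ql Fc tau x0 y0).
  set (P := fun n => fst (Pic Fc tau x0 y0 n)). set (Q := fun n => snd (Pic Fc tau x0 y0 n)).
  set (D0 := Rabs y0 + MF).
  assert (HD0 : 0 <= D0) by (unfold D0; generalize (Rabs_pos y0); lra).
  assert (lipL : forall s x, Rabs (s - tau) <= d -> Rabs (x - tau) <= d ->
            Rabs (p s - p x) <= D0 * Rabs (s - x) /\ Rabs (q s - q x) <= MF * Rabs (s - x)).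
  { intros s x Hs Hx. split.
    - apply (lim_approx _ _ (4 * D0)). intros n.
      destruct (LB s Hs n) as [A1 _]. destruct (LB x Hx n) as [A2 _].
      destruct (HLIP n s x Hs Hx) as [A3 _].
      fold p P in A1, A2, A3 |- *. fold D0 in A1, A2, A3.
      replace (p s - p x) with ((p s - P n s) + (P n s - P n x) + - (p x - P n x)) by ring.
      eapply Rle_trans. apply Rabs_triang. rewrite Rabs_Ropp.
      eapply Rle_trans. apply Rplus_le_compat_r. apply Rabs_triang. unfold P in *. lra.
    - apply (lim_approx _ _ (4 * D0)). intros n.
      destruct (LB s Hs n) as [_ A1]. destruct (LB x Hx n) as [_ A2].
      destruct (HLIP n s x Hs Hx) as [_ A3].
      fold q Q in A1, A2, A3 |- *. fold D0 in A1, A2.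
      replace (q s - q x) with ((q s - Q n s) + (Q n s - Q n x) + - (q x - Q n x)) by ring.
      eapply Rle_trans. apply Rabs_triang. rewrite Rabs_Ropp.
      eapply Rle_trans. apply Rplus_le_compat_r. apply Rabs_triang. unfold Q in *. lra. }
  assert (lipC : forall (g : R -> R) K t, 0 <= K -> Rabs (t - tau) < d ->
            (forall s x, Rabs (s - tau) <= d -> Rabs (x - tau) <= d -> Rabs (g s - g x) <= K * Rabs (s - x)) ->
            continuous g t).
  { intros g K t HK Ht Hg. apply filterlim_locally. intros e. apply locally_R.
    exists (Rmin (d - Rabs (t - tau)) (e / (K + 1))). split.
    apply Rmin_glb_lt. lra. apply Rdiv_lt_0_compat. apply cond_pos. lra.
    intros y Hy. change (Rabs (g y - g t) < e).
    assert (Rmin (d - Rabs (t - tau)) (e / (K + 1)) <= d - Rabs (t - tau)) by apply Rmin_l.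
    assert (Hm : Rmin (d - Rabs (t - tau)) (e / (K + 1)) <= e / (K + 1)) by apply Rmin_r.
    assert (Hyt : Rabs (y - tau) <= d).
    { replace (y - tau) with ((y - t) + (t - tau)) by ring. eapply Rle_trans. apply Rabs_triang. lra. }
    eapply Rle_lt_trans. apply Hg; auto. lra.
    assert (He : 0 < e) by apply cond_pos.
    assert (K * Rabs (y - t) <= K * (e / (K + 1))) by (apply Rmult_le_compat_l; lra).
    assert (K * (e / (K + 1)) < e).
    { replace (K * (e / (K + 1))) with (e - e / (K + 1)) by (field; lra).
      assert (0 < e / (K + 1)) by (apply Rdiv_lt_0_compat; lra). lra. }
    lra. }
  assert (contL : forall t, Rabs (t - tau) < d -> continuous p t /\ continuous q t).
  { intros t Ht. split.
    - apply (lipC p D0 t HD0 Ht). intros; apply lipL; auto.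
    - apply (lipC q MF t HM Ht). intros; apply lipL; auto. }
  assert (contF : forall t, Rabs (t - tau) < d -> continuous (fun s => Fc s (p s) (q s)) t).
  { intros t Ht. apply HFC; apply contL; auto. }
  assert (segC : forall t z, Rabs (t - tau) < d -> Rmin tau t <= z <= Rmax tau t -> Rabs (z - tau) < d).
  { intros t z Ht Hz. destruct (seg_le tau t z d Hz (Rlt_le _ _ Ht)) as [H1 _]. lra. }
  assert (intP : forall t, Rabs (t - tau) < d -> p t = x0 + RInt q tau t).
  { intros t Ht. apply Rminus_diag_uniq. apply (zero_of_half _ (4 * D0)). intros n.
    destruct (LB t (Rlt_le _ _ Ht) (S n)) as [A1 _]. fold p in A1.
    change (fst (Pic Fc tau x0 y0 (S n)) t) with (x0 + RInt (Q n) tau t) in A1.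
    assert (A2 : Rabs (RInt (fun s => Q n s - q s) tau t) <= Rabs (t - tau) * (2 * D0 * (/2)^n)).
    { apply RInt_abs_bound. intros z Hz. apply cR_minus. apply HC. apply contL; eauto.
      intros z Hz. destruct (LB z (Rlt_le _ _ (segC t z Ht Hz)) n) as [_ A]. fold q in A.
      rewrite Rabs_minus_sym. exact A. }
    rewrite RInt_minusR in A2. 2: apply ex_RInt_cont; intros; apply HC.
    2: apply ex_RInt_cont; intros; apply contL; eauto.
    assert (Rabs (t - tau) * (2 * D0 * (/2)^n) <= 1 * (2 * D0 * (/2)^n)).
    { apply Rmult_le_compat_r. apply Rmult_le_pos. lra. apply pow_le; lra. lra. }
    replace (p t - (x0 + RInt q tau t)) with ((p t - (x0 + RInt (Q n) tau t)) + (RInt (Q n) tau t - RInt q tau t)) by ring.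
    eapply Rle_trans. apply Rabs_triang. simpl pow in A1.
    assert (0 <= (/2)^n) by (apply pow_le; lra). fold D0 in A1.
    assert (0 <= D0 * (/2)^n) by (apply Rmult_le_pos; lra).
    assert (E1 : 2 * D0 * (/ 2 * (/ 2) ^ n) = D0 * (/2)^n) by field. lra. }
  assert (intQ : forall t, Rabs (t - tau) < d -> q t = y0 + RInt (fun s => Fc s (p s) (q s)) tau t).
  { intros t Ht. apply Rminus_diag_uniq. apply (zero_of_half _ (2 * D0 + Lp * (4 * D0))). intros n.
    destruct (LB t (Rlt_le _ _ Ht) (S n)) as [_ A1]. fold q in A1.
    change (snd (Pic Fc tau x0 y0 (S n)) t) with
      (y0 + RInt (fun s => Fc s (P n s) (Q n s)) tau t) in A1.
    assert (A2 : Rabs (RInt (fun s => Fc s (P n s) (Q n s) - Fc s (p s) (q s)) tau t)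
                 <= Rabs (t - tau) * (Lp * (4 * D0 * (/2)^n))).
    { apply RInt_abs_bound. intros z Hz. apply cR_minus. apply HFC; apply HC. apply contF; eauto.
      intros z Hz. destruct (LB z (Rlt_le _ _ (segC t z Ht Hz)) n) as [B1 B2]. fold p q in B1, B2.
      eapply Rle_trans. apply HL. apply Rmult_le_compat_l; auto.
      rewrite (Rabs_minus_sym (P n z)), (Rabs_minus_sym (Q n z)). unfold P, Q. fold D0 in B1, B2. lra. }
    rewrite RInt_minusR in A2. 2: apply ex_RInt_cont; intros; apply HFC; apply HC.
    2: apply ex_RInt_cont; intros; apply contF; eauto.
    assert (Rabs (t - tau) * (Lp * (4 * D0 * (/2)^n)) <= 1 * (Lp * (4 * D0 * (/2)^n))).
    { apply Rmult_le_compat_r. apply Rmult_le_pos. lra. apply Rmult_le_pos. lra. apply pow_le; lra. lra. }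
    replace (q t - (y0 + RInt (fun s => Fc s (p s) (q s)) tau t)) with
      ((q t - (y0 + RInt (fun s => Fc s (P n s) (Q n s)) tau t)) +
       (RInt (fun s => Fc s (P n s) (Q n s)) tau t - RInt (fun s => Fc s (p s) (q s)) tau t)) by ring.
    eapply Rle_trans. apply Rabs_triang. simpl pow in A1.
    assert (0 <= (/2)^n) by (apply pow_le; lra). fold D0 in A1.
    assert (0 <= D0 * (/2)^n) by (apply Rmult_le_pos; lra).
    assert (E1 : 2 * D0 * (/ 2 * (/ 2) ^ n) = D0 * (/2)^n) by field.
    assert (E2 : 1 * (Lp * (4 * D0 * (/ 2) ^ n)) = Lp * (4 * D0) * (/2)^n) by ring.
    assert (E3 : (2 * D0 + Lp * (4 * D0)) * (/ 2) ^ n = 2 * (D0 * (/2)^n) + Lp * (4 * D0) * (/2)^n) by ring.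
    lra. }
  intros t Ht.
  assert (Hloc : forall (g : R -> R) (w : R -> R), (forall s, Rabs (s - tau) < d -> g s = w s) ->
                   locally t (fun s => w s = g s)).
  { intros g w Hgw. apply locally_R. exists (d - Rabs (t - tau)). split. lra.
    intros y Hy. symmetry. apply Hgw.
    replace (y - tau) with ((y - t) + (t - tau)) by ring.
    eapply Rle_lt_trans. apply Rabs_triang. lra. }
  split. apply contL; auto. split. apply contL; auto. split.
  - apply (is_derive_ext_loc (fun s => x0 + RInt q tau s)). apply Hloc. exact intP.
    apply is_derive_cplus. apply (RInt_der_loc q tau t d); auto. intros; apply contL; auto.
  - split.
    + apply (is_derive_ext_loc (fun s => y0 + RInt (fun s => Fc s (p s) (q s)) tau s)). apply Hloc. exact intQ.
      apply is_derive_cplus. apply (RInt_der_loc (fun s => Fc s (p s) (q s)) tau t d); auto.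
    + split; [|split; [|split; [apply intP; auto|apply intQ; auto]]].
      * apply (lim_approx _ _ (2 * D0)). intros n.
        destruct (LB t (Rlt_le _ _ Ht) n) as [A1 _]. destruct (HIB n t (Rlt_le _ _ Ht)) as [_ A2].
        fold p in A1. replace (p t - x0) with ((p t - P n t) + (P n t - x0)) by ring.
        eapply Rle_trans. apply Rabs_triang. unfold P. fold D0 in A1, A2 |- *. lra.
      * apply (lim_approx _ _ (2 * D0)). intros n.
        destruct (LB t (Rlt_le _ _ Ht) n) as [_ A1]. destruct (HIB n t (Rlt_le _ _ Ht)) as [A2 _].
        fold q in A1. replace (q t - y0) with ((q t - Q n t) + (Q n t - y0)) by ring.
        eapply Rle_trans. apply Rabs_triang. unfold Q. fold D0 in A1. lra.
Qed.

Lemma f1_bound a b c t0 beta beta0 r f f1 f2 L T0 :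
  SOL a b c t0 beta beta0 (Finite r) f f1 f2 -> t0 < T0 -> T0 < r ->
  (forall t, t0 <= t -> t < r -> f t <= L) ->
  exists M1, 0 < M1 /\ forall t, T0 <= t -> t < r -> f1 t <= M1.
Proof.
  intros S HT0 HT0r HL.
  destruct (sol_basic _ _ _ _ _ _ _ _ _ _ S) as [D1 [D2 [C2 [R0 [R1 R2]]]]].
  destruct (sol_pos _ _ _ _ _ _ _ _ _ _ S) as [P1 P2].
  destruct (sol_v _ _ _ _ _ _ _ _ _ _ S) as [m [Hm Hv]].
  assert (Ha := S_a _ _ _ _ _ _ _ _ _ _ S). assert (Hb := S_b _ _ _ _ _ _ _ _ _ _ S).
  assert (Hc1 := S_c1 _ _ _ _ _ _ _ _ _ _ S).
  assert (Ht0 := S_t0 _ _ _ _ _ _ _ _ _ _ S). assert (Hbe := S_beta _ _ _ _ _ _ _ _ _ _ S).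
  assert (HLb : beta <= L) by (apply Rle_trans with (f T0); [apply P2; simpl; lra | apply HL; lra]).
  set (K := b * L / (m * t0)).
  set (psi := fun t => c * ln (1 + f t) - ln (f1 t) + K * t).
  assert (Hmono : forall t, T0 <= t -> t < r -> psi T0 <= psi t).
  { intros t Ht Htr.
    apply (mono T0 (Finite r) psi
       (fun t => a / t - b * f t * (1 + f t) / (t ^ 2 * f1 t) + K)); simpl; auto.
    - apply cont_rcont. unfold psi.
      assert (HT0' : Rbar_lt T0 (Finite r)) by (simpl; lra).
      assert (Hf := P2 T0 (Rlt_le _ _ HT0) HT0'). assert (Hf1 := P1 T0 (Rlt_le _ _ HT0) HT0').
      assert (Hcf : continuous f T0).
      { apply (ex_derive_continuous (K:=R_AbsRing) (V:=R_NormedModule)). eexists; apply D1; auto. }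
      assert (Hcf1 : continuous f1 T0).
      { apply (ex_derive_continuous (K:=R_AbsRing) (V:=R_NormedModule)). eexists; apply D2; auto. }
      apply cR_plus. apply cR_minus. apply (cR_mult (fun _ => c)). apply cR_const.
      apply cR_ln. apply cR_plus. apply cR_const. auto. lra.
      apply cR_ln; auto. apply (cR_mult (fun _ => K)). apply cR_const. apply cR_id.
    - intros s Hs1 Hs2. simpl in Hs2.
      assert (Hs' : Rbar_lt s (Finite r)) by (simpl; lra).
      assert (Hs1' : t0 < s) by lra. clear Hs1. rename Hs1' into Hs1.
      assert (Hf := P2 s (Rlt_le _ _ Hs1) Hs'). assert (Hf1 := P1 s (Rlt_le _ _ Hs1) Hs').
      assert (Hode := S_ode _ _ _ _ _ _ _ _ _ _ S s (conj (Rlt_le _ _ Hs1) Hs')).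
      unfold psi. auto_derive.
      + repeat split; try (eexists; apply D1; auto); try (eexists; apply D2; auto); lra.
      + rwD. rewrite (is_derive_unique _ _ _ (D1 s Hs1 Hs')), (is_derive_unique _ _ _ (D2 s Hs1 Hs')).
        rewrite Hode. field. repeat split; lra.
    - intros s Hs1 Hs2. simpl in Hs2.
      assert (Hs' : Rbar_lt s (Finite r)) by (simpl; lra).
      assert (Hs1' : t0 < s) by lra. clear Hs1. rename Hs1' into Hs1.
      assert (Hf := P2 s (Rlt_le _ _ Hs1) Hs'). assert (Hf1 := P1 s (Rlt_le _ _ Hs1) Hs').
      assert (Hvs := Hv s (Rlt_le _ _ Hs1) Hs'). unfold vfun in Hvs.
      assert (HfL : f s <= L) by (apply HL; lra).
      assert (Hs0 : 0 < s) by lra.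
      assert (H1 : m * (1 + f s) < s * f1 s).
      { apply Rmult_lt_reg_r with (/ (1 + f s)). apply Rinv_0_lt_compat; lra.
        rewrite Rmult_assoc, Rinv_r, Rmult_1_r by lra. exact Hvs. }
      assert (H2 : b * f s * (1 + f s) / (s ^ 2 * f1 s) <= K).
      { unfold K. apply div_le_l. apply Rmult_lt_0_compat. apply pow_lt; lra. lra.
        assert (Hpos : 0 < s * f1 s) by nra.
        assert (b * f s * (1 + f s) * (m * t0) <= b * L * (s ^ 2 * f1 s)).
        { assert (b * f s * (m * (1 + f s)) * t0 <= b * f s * (s * f1 s) * t0).
          { apply Rmult_le_compat_r. lra. apply Rmult_le_compat_l. nra. lra. }
          assert (b * f s * (s * f1 s) * t0 <= b * L * (s * f1 s) * s).
          { assert (b * f s <= b * L) by (apply Rmult_le_compat_l; lra).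
            assert (0 <= b * f s) by nra.
            apply Rmult_le_compat; try nra. }
          replace (s ^ 2 * f1 s) with ((s * f1 s) * s) by ring. nra. }
        assert (0 < m * t0) by nra.
        apply Rmult_le_reg_r with (m * t0); auto.
        replace (b * L / (m * t0) * (s ^ 2 * f1 s) * (m * t0)) with (b * L * (s ^ 2 * f1 s)) by (field; lra).
        lra. }
      assert (0 < a / s) by (apply Rdiv_lt_0_compat; lra). simpl in H2 |- *. lra. }
  exists (exp (c * ln (1 + L) + K * r - psi T0)). split. apply exp_pos.
  intros t Ht Htr. specialize (Hmono t Ht Htr). unfold psi in Hmono.
  assert (Ht' : Rbar_lt t (Finite r)) by (simpl; lra).
  assert (Hf := P2 t (Rle_trans _ _ _ (Rlt_le _ _ HT0) Ht) Ht').
  assert (Hf1 := P1 t (Rle_trans _ _ _ (Rlt_le _ _ HT0) Ht) Ht').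
  assert (HfL : f t <= L) by (apply HL; lra).
  assert (ln (1 + f t) <= ln (1 + L)).
  { destruct (Rle_lt_or_eq_dec _ _ HfL) as [h|h]. left; apply ln_increasing; lra. rewrite h; lra. }
  assert (K * t <= K * r).
  { apply Rmult_le_compat_l. unfold K. apply Rdiv_le_0_compat. nra. nra. lra. }
  assert (c * ln (1 + f t) <= c * ln (1 + L)) by (apply Rmult_le_compat_l; lra).
  rewrite <- (exp_ln (f1 t)) by lra.
  assert (ln (f1 t) <= c * ln (1 + L) + K * r - (c * ln (1 + f T0) - ln (f1 T0) + K * T0)) by lra.
  destruct (Rle_lt_or_eq_dec _ _ H2) as [h|h]. left; apply exp_increasing; auto.
  unfold psi. rewrite h; lra.
Qed.

Definition clampR (lo hi x : R) := Rmax lo (Rmin hi x).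

Lemma clamp_lip lo hi x y : Rabs (clampR lo hi x - clampR lo hi y) <= Rabs (x - y).
Proof. unfold clampR, Rmax, Rmin. repeat destruct Rle_dec; split_Rabs; lra. Qed.

Lemma clamp_range lo hi x : lo <= hi -> lo <= clampR lo hi x <= hi.
Proof. intros. unfold clampR, Rmax, Rmin. repeat destruct Rle_dec; lra. Qed.

Lemma clamp_id lo hi x : lo <= x <= hi -> clampR lo hi x = x.
Proof. intros. unfold clampR, Rmax, Rmin. repeat destruct Rle_dec; lra. Qed.

Lemma lip1_cont (g : R -> R) : (forall x y, Rabs (g x - g y) <= Rabs (x - y)) ->
  forall x, continuous g x.
Proof.
  intros H x. apply filterlim_locally. intros e. apply locally_R. exists e. split.
  apply cond_pos. intros y Hy. change (Rabs (g y - g x) < e). eapply Rle_lt_trans. apply H. auto.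
Qed.

Lemma clamp_cont lo hi x : continuous (clampR lo hi) x.
Proof. apply lip1_cont. apply clamp_lip. Qed.

Lemma Rmax_cont t0 x : continuous (fun t => Rmax t t0) x.
Proof. apply lip1_cont. intros. unfold Rmax. repeat destruct Rle_dec; split_Rabs; lra. Qed.

Definition Fode (a b c t x y : R) := - a / t * y + b / t ^ 2 * x * (1 + x) + c * y ^ 2 / (1 + x).
Definition Fcl (a b c t0 xlo xhi ylo yhi t x y : R) :=
  Fode a b c (Rmax t t0) (clampR xlo xhi x) (clampR ylo yhi y).

Lemma abs_mul_le (u v A B : R) : Rabs u <= A -> Rabs v <= B -> Rabs (u * v) <= A * B.
Proof.
  intros. rewrite Rabs_mult. apply Rmult_le_compat; auto; apply Rabs_pos.
Qed.

Lemma F_bound a b c t0 t x y X Y : 0 <= a -> 0 <= b -> 0 <= c -> 0 < t0 -> t0 <= t ->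
  0 <= x <= X -> Rabs y <= Y ->
  Rabs (Fode a b c t x y) <= a * Y / t0 + b * X * (1 + X) / t0 ^ 2 + c * Y ^ 2.
Proof.
  intros Ha Hb Hc Ht0 Ht Hx Hy. unfold Fode.
  assert (HY : 0 <= Y) by (eapply Rle_trans; [apply Rabs_pos|eauto]).
  assert (H1 : Rabs (- a / t * y) <= a * Y / t0).
  { replace (- a / t * y) with (- (a / t) * y) by (field; lra).
    replace (a * Y / t0) with ((a / t0) * Y) by (field; lra).
    apply abs_mul_le; auto. rewrite Rabs_Ropp, Rabs_right.
    apply Rmult_le_compat_l; auto. apply Rinv_le_contravar; lra.
    apply Rle_ge, Rdiv_le_0_compat; lra. }
  assert (H2 : Rabs (b / t ^ 2 * x * (1 + x)) <= b * X * (1 + X) / t0 ^ 2).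
  { rewrite Rabs_right.
    2: { apply Rle_ge. apply Rmult_le_pos. apply Rmult_le_pos. apply Rdiv_le_0_compat; auto.
         apply pow_lt; lra. lra. lra. }
    assert (0 < t0 ^ 2) by (apply pow_lt; lra).
    assert (t0 ^ 2 <= t ^ 2) by (apply pow_incr; lra).
    assert (b / t ^ 2 <= b / t0 ^ 2).
    { unfold Rdiv. apply Rmult_le_compat_l; auto. apply Rinv_le_contravar; lra. }
    assert (0 <= b / t ^ 2) by (apply Rdiv_le_0_compat; lra).
    replace (b * X * (1 + X) / t0 ^ 2) with (b / t0 ^ 2 * X * (1 + X)) by (field; lra).
    apply Rmult_le_compat; try nra. }
  assert (H3 : Rabs (c * y ^ 2 / (1 + x)) <= c * Y ^ 2).
  { rewrite Rabs_right.
    2: { apply Rle_ge. apply Rdiv_le_0_compat. apply Rmult_le_pos; auto. apply pow2_ge_0. lra. }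
    assert (y ^ 2 <= Y ^ 2).
    { rewrite <- (pow2_abs y). apply pow_incr. split; auto. apply Rabs_pos. }
    apply Rle_trans with (c * y ^ 2). 2: apply Rmult_le_compat_l; auto.
    unfold Rdiv. rewrite <- (Rmult_1_r (c * y ^ 2)) at 2. apply Rmult_le_compat_l.
    apply Rmult_le_pos; auto. apply pow2_ge_0.
    rewrite <- Rinv_1. apply Rinv_le_contravar; lra. }
  eapply Rle_trans. apply Rabs_triang. eapply Rle_trans. apply Rplus_le_compat_r. apply Rabs_triang.
  lra.
Qed.

Lemma F_lip a b c t0 t x y x' y' X Y : 0 <= a -> 0 <= b -> 0 <= c -> 0 < t0 -> t0 <= t ->
  0 <= x <= X -> 0 <= x' <= X -> Rabs y <= Y -> Rabs y' <= Y ->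
  Rabs (Fode a b c t x y - Fode a b c t x' y') <=
  (a / t0 + b * (1 + 2 * X) / t0 ^ 2 + c * (2 * Y + Y ^ 2)) * (Rabs (x - x') + Rabs (y - y')).
Proof.
  intros Ha Hb Hc Ht0 Ht Hx Hx' Hy Hy'. unfold Fode.
  assert (HY : 0 <= Y) by (eapply Rle_trans; [apply Rabs_pos|eauto]).
  assert (Hdx := Rabs_pos (x - x')). assert (Hdy := Rabs_pos (y - y')).
  assert (E : - a / t * y + b / t ^ 2 * x * (1 + x) + c * y ^ 2 / (1 + x) -
    (- a / t * y' + b / t ^ 2 * x' * (1 + x') + c * y' ^ 2 / (1 + x')) =
    (- (a / t)) * (y - y') + (b / t ^ 2) * ((x - x') * (1 + x + x')) +
    c * ((y - y') * ((y + y') / (1 + x))) + c * (y' ^ 2 * ((x' - x) / ((1 + x) * (1 + x'))))).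
  { field. lra. }
  rewrite E. clear E.
  assert (H1 : Rabs (- (a / t) * (y - y')) <= a / t0 * Rabs (y - y')).
  { rewrite Rabs_mult, Rabs_Ropp, Rabs_right by (apply Rle_ge, Rdiv_le_0_compat; lra).
    apply Rmult_le_compat_r; auto. unfold Rdiv. apply Rmult_le_compat_l; auto.
    apply Rinv_le_contravar; lra. }
  assert (H2 : Rabs ((b / t ^ 2) * ((x - x') * (1 + x + x'))) <= b * (1 + 2 * X) / t0 ^ 2 * Rabs (x - x')).
  { assert (0 < t0 ^ 2) by (apply pow_lt; lra).
    assert (t0 ^ 2 <= t ^ 2) by (apply pow_incr; lra).
    assert (b / t ^ 2 <= b / t0 ^ 2).
    { unfold Rdiv. apply Rmult_le_compat_l; auto. apply Rinv_le_contravar; lra. }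
    assert (0 <= b / t ^ 2) by (apply Rdiv_le_0_compat; lra).
    replace (b * (1 + 2 * X) / t0 ^ 2 * Rabs (x - x')) with (b / t0 ^ 2 * (Rabs (x - x') * (1 + 2 * X))) by (field; lra).
    apply abs_mul_le. rewrite Rabs_right; lra.
    apply abs_mul_le. lra. rewrite Rabs_right; lra. }
  assert (H3 : Rabs (c * ((y - y') * ((y + y') / (1 + x)))) <= c * (2 * Y) * Rabs (y - y')).
  { replace (c * (2 * Y) * Rabs (y - y')) with (c * (Rabs (y - y') * (2 * Y))) by ring.
    apply abs_mul_le. rewrite Rabs_right; lra. apply abs_mul_le. lra.
    unfold Rdiv. rewrite Rabs_mult. rewrite (Rabs_right (/ (1 + x))) by (apply Rle_ge; left; apply Rinv_0_lt_compat; lra).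
    assert (Rabs (y + y') <= 2 * Y) by (eapply Rle_trans; [apply Rabs_triang|lra]).
    assert (/ (1 + x) <= 1) by (rewrite <- Rinv_1; apply Rinv_le_contravar; lra).
    assert (0 < / (1 + x)) by (apply Rinv_0_lt_compat; lra).
    assert (0 <= Rabs (y + y')) by apply Rabs_pos. nra. }
  assert (H4 : Rabs (c * (y' ^ 2 * ((x' - x) / ((1 + x) * (1 + x'))))) <= c * Y ^ 2 * Rabs (x - x')).
  { replace (c * Y ^ 2 * Rabs (x - x')) with (c * (Y ^ 2 * Rabs (x - x'))) by ring.
    apply abs_mul_le. rewrite Rabs_right; lra. apply abs_mul_le.
    rewrite Rabs_right by (apply Rle_ge, pow2_ge_0). rewrite <- (pow2_abs y').
    apply pow_incr. split; auto. apply Rabs_pos.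
    unfold Rdiv. rewrite Rabs_mult, Rabs_minus_sym.
    rewrite (Rabs_right (/ ((1 + x) * (1 + x')))) by (apply Rle_ge; left; apply Rinv_0_lt_compat; nra).
    assert (/ ((1 + x) * (1 + x')) <= 1) by (rewrite <- Rinv_1; apply Rinv_le_contravar; nra).
    assert (0 < / ((1 + x) * (1 + x'))) by (apply Rinv_0_lt_compat; nra). nra. }
  eapply Rle_trans. apply Rabs_triang. eapply Rle_trans. apply Rplus_le_compat_r. apply Rabs_triang.
  eapply Rle_trans. apply Rplus_le_compat_r. apply Rplus_le_compat_r. apply Rabs_triang.
  assert (0 <= a / t0 * Rabs (x - x')) by (apply Rmult_le_pos; auto; apply Rdiv_le_0_compat; lra).
  assert (0 <= b * (1 + 2 * X) / t0 ^ 2 * Rabs (y - y')).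
  { apply Rmult_le_pos; auto. apply Rdiv_le_0_compat. nra. apply pow_lt; lra. }
  assert (0 <= c * (2 * Y) * Rabs (x - x')) by (apply Rmult_le_pos; nra).
  assert (0 <= c * Y ^ 2 * Rabs (y - y')) by (apply Rmult_le_pos; auto; apply Rmult_le_pos; auto; apply pow2_ge_0).
  nra.
Qed.

Lemma Fode_cont a b c (h0 h1 h2 : R -> R) t : continuous h0 t -> continuous h1 t -> continuous h2 t ->
  h0 t <> 0 -> 1 + h1 t <> 0 -> continuous (fun s => Fode a b c (h0 s) (h1 s) (h2 s)) t.
Proof.
  intros C0 C1 C2 N0 N1. unfold Fode.
  apply cR_plus. apply cR_plus.
  - apply cR_mult. apply cR_div. apply cR_const. auto. auto. auto.
  - apply cR_mult. apply cR_mult. apply cR_div. apply cR_const. apply cR_pow; auto.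
    apply pow_nonzero; auto. auto. apply cR_plus. apply cR_const. auto.
  - apply cR_div. apply cR_mult. apply cR_const. apply cR_pow; auto.
    apply cR_plus. apply cR_const. auto. auto.
Qed.

Lemma Fcl_pichyp a b c t0 xlo xhi ylo yhi X Y :
  0 <= a -> 0 <= b -> 0 <= c -> 0 < t0 -> 0 <= xlo -> xlo <= xhi -> xhi <= X ->
  ylo <= yhi -> Rabs ylo <= Y -> Rabs yhi <= Y ->
  (forall g1 g2 t, continuous g1 t -> continuous g2 t ->
     continuous (fun s => Fcl a b c t0 xlo xhi ylo yhi s (g1 s) (g2 s)) t) /\
  (forall t x y, Rabs (Fcl a b c t0 xlo xhi ylo yhi t x y) <=
     a * Y / t0 + b * X * (1 + X) / t0 ^ 2 + c * Y ^ 2) /\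
  (forall t x y x' y', Rabs (Fcl a b c t0 xlo xhi ylo yhi t x y - Fcl a b c t0 xlo xhi ylo yhi t x' y') <=
     (a / t0 + b * (1 + 2 * X) / t0 ^ 2 + c * (2 * Y + Y ^ 2)) * (Rabs (x - x') + Rabs (y - y'))).
Proof.
  intros Ha Hb Hc Ht0 Hxl Hx Hxh Hy HyY1 HyY2.
  assert (Cx : forall x, xlo <= clampR xlo xhi x <= xhi) by (intros; apply clamp_range; auto).
  assert (Cy : forall y, Rabs (clampR ylo yhi y) <= Y).
  { intros y. destruct (clamp_range ylo yhi y Hy). apply Rabs_le. split_Rabs; lra. }
  assert (Ct : forall t, t0 <= Rmax t t0) by (intros; apply Rmax_r).
  split; [|split].
  - intros g1 g2 t C1 C2. unfold Fcl. apply Fode_cont.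
    apply Rmax_cont. apply (continuous_comp g1 (clampR xlo xhi)); auto. apply clamp_cont.
    apply (continuous_comp g2 (clampR ylo yhi)); auto. apply clamp_cont.
    specialize (Ct t). lra. specialize (Cx (g1 t)). lra.
  - intros t x y. unfold Fcl. apply F_bound; auto. specialize (Cx x). split; lra.
  - intros t x y x' y'. unfold Fcl.
    assert (Hx1 : 0 <= clampR xlo xhi x <= X) by (specialize (Cx x); split; lra).
    assert (Hx2 : 0 <= clampR xlo xhi x' <= X) by (specialize (Cx x'); split; lra).
    eapply Rle_trans. exact (F_lip a b c t0 (Rmax t t0) _ _ _ _ X Y Ha Hb Hc Ht0 (Ct t) Hx1 Hx2 (Cy y) (Cy y')).
    apply Rmult_le_compat_l.
    + assert (HY : 0 <= Y) by (eapply Rle_trans; [apply Rabs_pos|eauto]).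
      assert (0 <= a / t0) by (apply Rdiv_le_0_compat; lra).
      assert (0 <= b * (1 + 2 * X) / t0 ^ 2) by (apply Rdiv_le_0_compat; [nra|apply pow_lt; lra]).
      assert (0 <= c * (2 * Y + Y ^ 2)) by (apply Rmult_le_pos; auto; nra). lra.
    + apply Rplus_le_compat; apply clamp_lip.
Qed.

Lemma Rabs_le_inv (x y : R) : Rabs x <= y -> - y <= x <= y.
Proof. intros H. split_Rabs; lra. Qed.

Lemma within_transfer (I J : R -> Prop) (g1 g2 : R -> R) (t l d : R) : 0 < d ->
  (forall s, Rabs (s - t) < d -> I s -> J s /\ g2 s = g1 s) ->
  filterlim g1 (within J (locally t)) (locally l) ->
  filterlim g2 (within I (locally t)) (locally l).
Proof.
  intros Hd Hs H. apply filterlim_locally. intros e. apply within_R.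
  apply filterlim_locally with (eps := e) in H. apply within_R in H.
  destruct H as [d1 [Hd1 H]]. exists (Rmin d d1). split. apply Rmin_glb_lt; auto.
  intros y Hy HIy. assert (Rmin d d1 <= d) by apply Rmin_l. assert (Rmin d d1 <= d1) by apply Rmin_r.
  destruct (Hs y ltac:(lra) HIy) as [HJ He]. rewrite He. apply H; auto. lra.
Qed.

Lemma deriv_quot (u : R -> R) (t l : R) : is_derive u t l ->
  filterlim (fun s => (u s - u t) / (s - t)) (within (fun s => s <> t) (locally t)) (locally l).
Proof.
  intros H. apply filterlim_locally. intros e. apply within_R.
  apply is_derive_Reals in H. destruct (H e (cond_pos e)) as [d Hd].
  exists d. split. apply cond_pos. intros y Hy Hne. change (Rabs ((u y - u t) / (y - t) - l) < e).
  specialize (Hd (y - t)). replace (t + (y - t)) with y in Hd by ring. apply Hd. lra. auto.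
Qed.

Lemma cont_full (u : R -> R) (t : R) : continuous u t ->
  filterlim u (within (fun _ => True) (locally t)) (locally (u t)).
Proof.
  intros H. apply filterlim_locally. intros e. apply within_R.
  destruct (cont_eps u t H e (cond_pos e)) as [d [Hd H']]. exists d. split; auto. intros y Hy _. apply H'; auto.
Qed.

Lemma RInt_repr (u u' : R -> R) (x y : R) : x <= y ->
  (forall z, x <= z <= y -> is_derive u z (u' z)) -> (forall z, x <= z <= y -> continuous u' z) ->
  u y = u x + RInt u' x y.
Proof.
  intros Hxy Hd Hc.
  assert (H : is_RInt u' x y (minus (u y) (u x))).
  { apply (is_RInt_derive (V:=R_CompleteNormedModule)).
    intros z Hz. rewrite Rmin_left, Rmax_right in Hz by lra. apply Hd; lra.
    intros z Hz. rewrite Rmin_left, Rmax_right in Hz by lra. apply Hc; lra. }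
  assert (H2 : RInt u' x y = u y - u x) by exact (is_RInt_unique (V:=R_CompleteNormedModule) _ _ _ _ H). rewrite H2. ring.
Qed.

Lemma extend a b c t0 beta beta0 r f f1 f2 L :
  SOL a b c t0 beta beta0 (Finite r) f f1 f2 ->
  (forall t, t0 <= t -> t < r -> f t <= L) ->
  exists (t1 : Rbar) (h : R -> R),
    Rbar_lt r t1 /\ is_sol a b c t0 beta beta0 t1 h /\ (forall t, Ico t0 r t -> h t = f t).
Proof.
  intros S HL.
  destruct (sol_basic _ _ _ _ _ _ _ _ _ _ S) as [D1 [D2 [C2 [R0 [R1 R2]]]]].
  destruct (sol_pos _ _ _ _ _ _ _ _ _ _ S) as [P1 P2].
  assert (Ha := S_a _ _ _ _ _ _ _ _ _ _ S). assert (Hb := S_b _ _ _ _ _ _ _ _ _ _ S).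
  assert (Hc1 := S_c1 _ _ _ _ _ _ _ _ _ _ S).
  assert (Ht0 := S_t0 _ _ _ _ _ _ _ _ _ _ S). assert (Hbe := S_beta _ _ _ _ _ _ _ _ _ _ S).
  assert (Htm := S_tm _ _ _ _ _ _ _ _ _ _ S). simpl in Htm.
  assert (Hode := S_ode _ _ _ _ _ _ _ _ _ _ S).
  set (T0 := (t0 + r) / 2).
  assert (HT0 : t0 < T0 /\ T0 < r) by (unfold T0; lra). destruct HT0 as [HT0a HT0b].
  destruct (f1_bound _ _ _ _ _ _ _ _ _ _ L T0 S HT0a HT0b HL) as [M1 [HM1 HM1b]].
  assert (HLb : beta <= L) by (apply Rle_trans with (f T0); [apply P2; simpl; lra | apply HL; lra]).
  assert (Fint : forall t, T0 <= t -> t < r ->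
     t0 < t /\ Rbar_lt t (Finite r) /\ beta <= f t /\ f t <= L /\ 0 < f1 t /\ f1 t <= M1 /\
     f2 t = Fode a b c t (f t) (f1 t)).
  { intros t Ht Htr. assert (Ht' : Rbar_lt t (Finite r)) by (simpl; lra).
    split. lra. split. exact Ht'. split. apply P2; simpl; lra. split. apply HL; lra.
    split. apply P1; simpl; lra. split. apply HM1b; lra.
    rewrite Hode by (split; simpl; lra). reflexivity. }
  set (M2 := a * M1 / t0 + b * L * (1 + L) / t0 ^ 2 + c * M1 ^ 2).
  assert (HM2 : forall t, T0 <= t -> t < r -> Rabs (f2 t) <= M2).
  { intros t Ht Htr. destruct (Fint t Ht Htr) as [H1 [H2 [H3 [H4 [H5 [H6 H7]]]]]].
    rewrite H7. apply F_bound; try lra. rewrite Rabs_right; lra. }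
  assert (HM2p : 0 <= M2) by (eapply Rle_trans; [apply Rabs_pos | apply (HM2 T0); lra]).
  set (r0 := beta / 2). set (X := L + beta). set (Y := M1 + beta).
  set (MF := a * Y / t0 + b * X * (1 + X) / t0 ^ 2 + c * Y ^ 2).
  set (Lp := a / t0 + b * (1 + 2 * X) / t0 ^ 2 + c * (2 * Y + Y ^ 2)).
  assert (HMF : 0 <= MF).
  { unfold MF. assert (0 <= a * Y / t0) by (apply Rdiv_le_0_compat; [apply Rmult_le_pos; unfold Y; lra|lra]).
    assert (0 <= b * X * (1 + X) / t0 ^ 2) by (apply Rdiv_le_0_compat; [repeat apply Rmult_le_pos; unfold X; lra|apply pow_lt; lra]).
    assert (0 <= c * Y ^ 2) by (apply Rmult_le_pos; [lra|apply pow2_ge_0]). lra. }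
  assert (HLp : 0 <= Lp).
  { unfold Lp. assert (0 <= a / t0) by (apply Rdiv_le_0_compat; lra).
    assert (0 <= b * (1 + 2 * X) / t0 ^ 2) by (apply Rdiv_le_0_compat; [repeat apply Rmult_le_pos; unfold X; lra|apply pow_lt; lra]).
    assert (0 <= c * (2 * Y + Y ^ 2)) by (apply Rmult_le_pos; [lra|]; unfold Y; assert (0 <= (M1 + beta)^2) by apply pow2_ge_0; lra). lra. }
  set (K := Y + MF + M1 + M2 + 1).
  assert (HK : 0 < K) by (unfold K, Y; lra).
  set (d := Rmin 1 (Rmin (/ (2 * (1 + Lp))) (Rmin (r0 / K) (r - T0)))).
  assert (Hd1 : d <= 1) by apply Rmin_l.
  assert (Hd2 : d <= / (2 * (1 + Lp))) by (eapply Rle_trans; [apply Rmin_r|apply Rmin_l]).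
  assert (Hd3 : d <= r0 / K) by (eapply Rle_trans; [apply Rmin_r|eapply Rle_trans; [apply Rmin_r|apply Rmin_l]]).
  assert (Hd4 : d <= r - T0) by (eapply Rle_trans; [apply Rmin_r|eapply Rle_trans; [apply Rmin_r|apply Rmin_r]]).
  assert (Hd0 : 0 < d).
  { unfold d. apply Rmin_glb_lt. lra. apply Rmin_glb_lt. apply Rinv_0_lt_compat; lra.
    apply Rmin_glb_lt. apply Rdiv_lt_0_compat; unfold r0; lra. lra. }
  assert (HdL : d * (1 + Lp) <= /2).
  { apply Rle_trans with (/ (2 * (1 + Lp)) * (1 + Lp)). apply Rmult_le_compat_r; lra.
    right. field. lra. }
  assert (HdK : d * K <= r0).
  { apply Rle_trans with (r0 / K * K). apply Rmult_le_compat_r; lra. right. field. lra. }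
  assert (HdY : d * (Y + MF) <= r0).
  { apply Rle_trans with (d * K); auto. apply Rmult_le_compat_l; unfold K; lra. }
  assert (HdM1 : d * M1 <= r0).
  { apply Rle_trans with (d * K); auto. apply Rmult_le_compat_l; unfold K, Y; lra. }
  assert (HdM2 : d * M2 <= r0).
  { apply Rle_trans with (d * K); auto. apply Rmult_le_compat_l; unfold K, Y; lra. }
  set (tau := Rmax T0 (r - d / 2)).
  assert (Htau1 : T0 <= tau) by apply Rmax_l. assert (Htau2 : r - d / 2 <= tau) by apply Rmax_r.
  assert (Htau3 : tau < r) by (unfold tau; apply Rmax_lub_lt; lra).
  destruct (Fint tau Htau1 Htau3) as [Ft1 [Ft2 [Ft3 [Ft4 [Ft5 [Ft6 Ft7]]]]]].
  set (x0 := f tau). set (y0 := f1 tau).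
  set (Fc := Fcl a b c t0 (x0 - r0) (x0 + r0) (y0 - r0) (y0 + r0)).
  assert (HP : PicHyp Fc MF Lp).
  { apply (Fcl_pichyp a b c t0 (x0 - r0) (x0 + r0) (y0 - r0) (y0 + r0) X Y); try lra;
    unfold x0, y0, r0, X, Y in *; try lra.
    apply Rabs_le; split; lra. apply Rabs_le; split; lra. }
  assert (PC := picard Fc MF Lp tau x0 y0 d HP Hd0 Hd1 HLp HdL).
  set (p := pl Fc tau x0 y0) in *. set (q := ql Fc tau x0 y0) in *.
  assert (Hy0 : Rabs y0 <= Y) by (unfold y0, Y; rewrite Rabs_right; lra).
  assert (Pbox : forall t, Rabs (t - tau) < d -> Rabs (p t - x0) <= r0 /\ Rabs (q t - y0) <= r0).
  { intros t Ht. destruct (PC t Ht) as [_ [_ [_ [_ [B1 [B2 _]]]]]]. split.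
    - eapply Rle_trans. apply B1. apply Rle_trans with (d * (Y + MF)); auto.
      apply Rmult_le_compat; try lra. apply Rabs_pos. generalize (Rabs_pos y0); lra.
    - eapply Rle_trans. apply B2. apply Rle_trans with (d * (Y + MF)); auto.
      apply Rmult_le_compat; try lra. apply Rabs_pos. unfold Y; lra. }
  assert (FcE : forall t x y, t0 <= t -> Rabs (x - x0) <= r0 -> Rabs (y - y0) <= r0 ->
             Fc t x y = Fode a b c t x y).
  { intros t x y Ht Hx Hy. unfold Fc, Fcl. rewrite Rmax_left by lra.
    apply Rabs_le_inv in Hx. apply Rabs_le_inv in Hy.
    rewrite !clamp_id by lra. reflexivity. }
  assert (Fbox : forall s, tau <= s -> s < r -> Rabs (f s - x0) <= r0 /\ Rabs (f1 s - y0) <= r0).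
  { intros s Hs Hsr.
    assert (Hcf1 : forall z, tau <= z <= s -> continuous f1 z).
    { intros z Hz. apply (ex_derive_continuous (K:=R_AbsRing) (V:=R_NormedModule)).
      eexists; apply D2; simpl; lra. }
    assert (Hcf2 : forall z, tau <= z <= s -> continuous f2 z).
    { intros z Hz. apply C2; simpl; lra. }
    rewrite (RInt_repr f f1 tau s), (RInt_repr f1 f2 tau s); auto.
    2: { intros z Hz. apply D2; simpl; lra. }
    2: { intros z Hz. apply D1; simpl; lra. }
    fold x0 y0. rewrite !addK. split.
    - eapply Rle_trans. apply RInt_abs_bound with (B := M1).
      intros z Hz; apply Hcf1; rewrite Rmin_left, Rmax_right in Hz; lra.
      intros z Hz; rewrite Rmin_left, Rmax_right in Hz by lra.
      destruct (Fint z ltac:(lra) ltac:(lra)) as [_ [_ [_ [_ [H5 [H6 _]]]]]]. rewrite Rabs_right; lra.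
      rewrite Rabs_right by lra. apply Rle_trans with (d * M1); auto. apply Rmult_le_compat_r; lra.
    - eapply Rle_trans. apply RInt_abs_bound with (B := M2).
      intros z Hz; apply Hcf2; rewrite Rmin_left, Rmax_right in Hz; lra.
      intros z Hz; rewrite Rmin_left, Rmax_right in Hz by lra. apply HM2; lra.
      rewrite Rabs_right by lra. apply Rle_trans with (d * M2); auto. apply Rmult_le_compat_r; lra. }
  assert (Hrd : r - tau < d) by lra.
  assert (Uniq : forall s, tau <= s -> s < r -> f s = p s /\ f1 s = q s).
  { assert (Hn : forall n s, tau <= s -> s < r ->
              Rabs (f s - p s) + Rabs (f1 s - q s) <= 4 * r0 * (/2) ^ n).
    { induction n as [|n IH]; intros s Hs Hsr.
      - assert (Hs' : Rabs (s - tau) < d) by (rewrite Rabs_right; lra).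
        destruct (Pbox s Hs') as [B1 B2]. destruct (Fbox s Hs Hsr) as [B3 B4].
        replace (f s - p s) with ((f s - x0) - (p s - x0)) by ring.
        replace (f1 s - q s) with ((f1 s - y0) - (q s - y0)) by ring.
        assert (Rabs ((f s - x0) - (p s - x0)) <= Rabs (f s - x0) + Rabs (p s - x0)).
        { unfold Rminus at 1. eapply Rle_trans. apply Rabs_triang. rewrite Rabs_Ropp. lra. }
        assert (Rabs ((f1 s - y0) - (q s - y0)) <= Rabs (f1 s - y0) + Rabs (q s - y0)).
        { unfold Rminus at 1. eapply Rle_trans. apply Rabs_triang. rewrite Rabs_Ropp. lra. }
        simpl. lra.
      - assert (Hseg : forall z, Rmin tau s <= z <= Rmax tau s -> tau <= z /\ z < r /\ Rabs (z - tau) < d).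
        { intros z Hz. rewrite Rmin_left, Rmax_right in Hz by lra. split. lra. split. lra.
          rewrite Rabs_right; lra. }
        assert (Hcf1 : forall z, Rmin tau s <= z <= Rmax tau s -> continuous f1 z).
        { intros z Hz. destruct (Hseg z Hz) as [Z1 [Z2 _]].
          apply (ex_derive_continuous (K:=R_AbsRing) (V:=R_NormedModule)).
          eexists; apply D2; simpl; lra. }
        assert (Hcf2 : forall z, Rmin tau s <= z <= Rmax tau s -> continuous f2 z).
        { intros z Hz. destruct (Hseg z Hz) as [Z1 [Z2 _]]. apply C2; simpl; lra. }
        assert (Hcq : forall z, Rmin tau s <= z <= Rmax tau s -> continuous q z).
        { intros z Hz. destruct (Hseg z Hz) as [_ [_ Z3]]. apply (PC z Z3). }
        assert (HcF : forall z, Rmin tau s <= z <= Rmax tau s -> continuous (fun s => Fc s (p s) (q s)) z).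
        { intros z Hz. destruct (Hseg z Hz) as [_ [_ Z3]]. destruct HP as [HFC _].
          apply HFC; apply (PC z Z3). }
        assert (Hs' : Rabs (s - tau) < d) by (rewrite Rabs_right; lra).
        destruct (PC s Hs') as [_ [_ [_ [_ [_ [_ [I1 I2]]]]]]].
        rewrite (RInt_repr f f1 tau s), (RInt_repr f1 f2 tau s); auto.
        2: { intros z Hz. apply D2; simpl; lra. }
        2: { intros z Hz. apply Hcf2. rewrite Rmin_left, Rmax_right; lra. }
        2: { intros z Hz. apply D1; simpl; lra. }
        2: { intros z Hz. apply Hcf1. rewrite Rmin_left, Rmax_right; lra. }
        rewrite I1, I2. fold x0 y0. rewrite !addD.
        rewrite <- (RInt_minusR f1 q) by (apply ex_RInt_cont; auto).
        rewrite <- (RInt_minusR f2 (fun s => Fc s (p s) (q s))) by (apply ex_RInt_cont; auto).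
        set (E := 4 * r0 * (/2) ^ n).
        assert (HE : 0 <= E) by (unfold E; apply Rmult_le_pos; [unfold r0; lra|apply pow_le; lra]).
        assert (A1 : Rabs (RInt (fun z => f1 z - q z) tau s) <= Rabs (s - tau) * E).
        { apply RInt_abs_bound. intros; apply cR_minus; auto.
          intros z Hz. destruct (Hseg z Hz) as [Z1 [Z2 _]]. specialize (IH z Z1 Z2).
          generalize (Rabs_pos (f z - p z)). fold E in IH. lra. }
        assert (A2 : Rabs (RInt (fun z => f2 z - Fc z (p z) (q z)) tau s) <= Rabs (s - tau) * (Lp * E)).
        { apply RInt_abs_bound. intros; apply cR_minus; auto.
          intros z Hz. destruct (Hseg z Hz) as [Z1 [Z2 Z3]]. specialize (IH z Z1 Z2).
          destruct (Fint z ltac:(lra) Z2) as [_ [_ [_ [_ [_ [_ F7]]]]]].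
          destruct (Fbox z Z1 Z2) as [B1 B2].
          rewrite F7, <- (FcE z (f z) (f1 z)) by (auto; lra).
          destruct HP as [_ [_ HLip]]. eapply Rle_trans. apply HLip.
          apply Rmult_le_compat_l; auto. }
        assert (Rabs (s - tau) * E + Rabs (s - tau) * (Lp * E) <= d * (1 + Lp) * E).
        { replace (Rabs (s - tau) * E + Rabs (s - tau) * (Lp * E)) with (Rabs (s - tau) * ((1 + Lp) * E)) by ring.
          replace (d * (1 + Lp) * E) with (d * ((1 + Lp) * E)) by ring.
          apply Rmult_le_compat_r. apply Rmult_le_pos; lra. lra. }
        assert (d * (1 + Lp) * E <= /2 * E) by (apply Rmult_le_compat_r; auto).
        replace (4 * r0 * (/ 2) ^ (Datatypes.S n)) with (/2 * E) by (unfold E; simpl; ring).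
        lra. }
    intros s Hs Hsr. split.
    - apply Rminus_diag_uniq. apply (zero_of_half _ (4 * r0)). intros n.
      specialize (Hn n s Hs Hsr). generalize (Rabs_pos (f1 s - q s)). lra.
    - apply Rminus_diag_uniq. apply (zero_of_half _ (4 * r0)). intros n.
      specialize (Hn n s Hs Hsr). generalize (Rabs_pos (f s - p s)). lra. }
  set (h := fun s => if Rlt_dec s r then f s else p s).
  set (h1 := fun s => if Rlt_dec s r then f1 s else q s).
  set (h2 := fun s => if Rlt_dec s r then f2 s else Fode a b c s (p s) (q s)).
  assert (Hleft : forall s, s < r -> h s = f s /\ h1 s = f1 s /\ h2 s = f2 s).
  { intros s Hs. unfold h, h1, h2. destruct (Rlt_dec s r); [auto|lra]. }
  assert (Hright : forall s, tau <= s -> s < tau + d ->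
            h s = p s /\ h1 s = q s /\ h2 s = Fode a b c s (p s) (q s)).
  { intros s Hs1 Hs2. unfold h, h1, h2. destruct (Rlt_dec s r) as [hs|hs].
    - destruct (Uniq s Hs1 hs) as [U1 U2]. split; auto. split; auto.
      destruct (Fint s ltac:(lra) hs) as [_ [_ [_ [_ [_ [_ F7]]]]]]. rewrite F7, U1, U2. auto.
    - auto. }
  assert (Hpq : forall t, r <= t -> t < tau + d ->
     Rabs (t - tau) < d /\ is_derive p t (q t) /\ is_derive q t (Fode a b c t (p t) (q t)) /\
     continuous p t /\ continuous q t /\ 0 < p t).
  { intros t Ht1 Ht2. assert (Htd : Rabs (t - tau) < d) by (rewrite Rabs_right; lra).
    destruct (PC t Htd) as [Q1 [Q2 [Q3 [Q4 _]]]]. destruct (Pbox t Htd) as [B1 B2].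
    rewrite (FcE t (p t) (q t)) in Q4 by (auto; lra).
    apply Rabs_le_inv in B1. unfold x0, r0 in B1.
    split; [|split; [|split; [|split; [|split]]]]; auto. lra. }
  exists (Finite (tau + d)), h. split. simpl; lra. split.
  2: { intros t [Ht Htr]. apply Hleft. simpl in Htr; lra. }
  exists h1, h2. split; [|split; [|split; [|split; [|split]]]].
  - intros t [Ht Htt]. simpl in Htt. destruct (Rlt_dec t r) as [ht|ht].
    + destruct (Hleft t ht) as [E1 [E2 _]]. rewrite E2.
      apply (within_transfer _ (fun s => Ico t0 (Finite r) s /\ s <> t)
               (fun s => (f s - f t) / (s - t)) _ t (f1 t) (r - t)). lra.
      * intros s Hs [[HIs1 HIs2] Hne]. apply Rabs_def2 in Hs.
        split. split; auto. split; simpl; lra. rewrite E1. rewrite (proj1 (Hleft s ltac:(lra))). auto.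
      * apply (S_d1 _ _ _ _ _ _ _ _ _ _ S). split; simpl; lra.
    + destruct (Hpq t ltac:(lra) Htt) as [_ [Q1 _]].
      destruct (Hright t ltac:(lra) Htt) as [E1 [E2 _]]. rewrite E2.
      apply (within_transfer _ (fun s => s <> t) (fun s => (p s - p t) / (s - t)) _ t (q t)
               (Rmin (t - tau) (tau + d - t))).
      apply Rmin_glb_lt; lra.
      * intros s Hs [_ Hne]. assert (Rmin (t - tau) (tau + d - t) <= t - tau) by apply Rmin_l.
        assert (Rmin (t - tau) (tau + d - t) <= tau + d - t) by apply Rmin_r. apply Rabs_def2 in Hs.
        split; auto. rewrite E1, (proj1 (Hright s ltac:(lra) ltac:(lra))). auto.
      * apply deriv_quot; auto.
  - intros t [Ht Htt]. simpl in Htt. destruct (Rlt_dec t r) as [ht|ht].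
    + destruct (Hleft t ht) as [_ [E1 E2]]. rewrite E2.
      apply (within_transfer _ (fun s => Ico t0 (Finite r) s /\ s <> t)
               (fun s => (f1 s - f1 t) / (s - t)) _ t (f2 t) (r - t)). lra.
      * intros s Hs [[HIs1 HIs2] Hne]. apply Rabs_def2 in Hs.
        split. split; auto. split; simpl; lra. rewrite E1. rewrite (proj1 (proj2 (Hleft s ltac:(lra)))). auto.
      * apply (S_d2 _ _ _ _ _ _ _ _ _ _ S). split; simpl; lra.
    + destruct (Hpq t ltac:(lra) Htt) as [_ [_ [Q2 _]]].
      destruct (Hright t ltac:(lra) Htt) as [_ [E1 E2]]. rewrite E2.
      apply (within_transfer _ (fun s => s <> t) (fun s => (q s - q t) / (s - t)) _ t _
               (Rmin (t - tau) (tau + d - t))).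
      apply Rmin_glb_lt; lra.
      * intros s Hs [_ Hne]. assert (Rmin (t - tau) (tau + d - t) <= t - tau) by apply Rmin_l.
        assert (Rmin (t - tau) (tau + d - t) <= tau + d - t) by apply Rmin_r. apply Rabs_def2 in Hs.
        split; auto. rewrite E1, (proj1 (proj2 (Hright s ltac:(lra) ltac:(lra)))). auto.
      * apply deriv_quot; auto.
  - intros t [Ht Htt]. simpl in Htt. destruct (Rlt_dec t r) as [ht|ht].
    + destruct (Hleft t ht) as [_ [_ E2]]. rewrite E2.
      apply (within_transfer _ (Ico t0 (Finite r)) f2 _ t (f2 t) (r - t)). lra.
      * intros s Hs [HIs1 HIs2]. apply Rabs_def2 in Hs.
        split. split; simpl; lra. rewrite (proj2 (proj2 (Hleft s ltac:(lra)))). auto.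
      * apply (S_cf2 _ _ _ _ _ _ _ _ _ _ S). split; simpl; lra.
    + destruct (Hpq t ltac:(lra) Htt) as [_ [_ [_ [Q3 [Q4 Q5]]]]].
      destruct (Hright t ltac:(lra) Htt) as [_ [_ E2]]. rewrite E2.
      apply (within_transfer _ (fun _ => True) (fun s => Fode a b c s (p s) (q s)) _ t _
               (Rmin (t - tau) (tau + d - t))).
      apply Rmin_glb_lt; lra.
      * intros s Hs _. assert (Rmin (t - tau) (tau + d - t) <= t - tau) by apply Rmin_l.
        assert (Rmin (t - tau) (tau + d - t) <= tau + d - t) by apply Rmin_r. apply Rabs_def2 in Hs.
        split; auto. rewrite (proj2 (proj2 (Hright s ltac:(lra) ltac:(lra)))). auto.
      * apply (cont_full (fun s => Fode a b c s (p s) (q s)) t). apply (Fode_cont a b c (fun s => s) p q t); auto. apply cR_id. lra. lra.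
  - intros t [Ht Htt]. simpl in Htt. destruct (Rlt_dec t r) as [ht|ht].
    + destruct (Hleft t ht) as [E0 [E1 E2]]. rewrite E0, E1, E2.
      assert (Ht' : Rbar_lt t (Finite r)) by (simpl; lra).
      assert (Hf := P2 t Ht Ht').
      rewrite Hode by (split; auto). split. lra. field. split; lra.
    + destruct (Hpq t ltac:(lra) Htt) as [_ [_ [_ [_ [_ Q5]]]]].
      destruct (Hright t ltac:(lra) Htt) as [E0 [E1 E2]]. rewrite E0, E1, E2.
      split. lra. unfold Fode. field. split; lra.
  - rewrite (proj1 (Hleft t0 Htm)). apply (S_f0 _ _ _ _ _ _ _ _ _ _ S).
  - rewrite (proj1 (proj2 (Hleft t0 Htm))). apply (S_f10 _ _ _ _ _ _ _ _ _ _ S).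
Qed.

Lemma f_mono a b c t0 beta beta0 tm f f1 f2 : SOL a b c t0 beta beta0 tm f f1 f2 ->
  forall x y, t0 <= x -> x <= y -> Rbar_lt y tm -> f x <= f y.
Proof.
  intros S x y Hx Hxy Hy.
  destruct (sol_basic _ _ _ _ _ _ _ _ _ _ S) as [D1 [D2 [C2 [R0 [R1 R2]]]]].
  destruct (sol_pos _ _ _ _ _ _ _ _ _ _ S) as [P1 P2].
  apply (mono x tm f f1); auto.
  - apply lt_tm with y; auto.
  - destruct (Rle_lt_or_eq_dec _ _ Hx) as [h|h]. 2: { rewrite <- h; auto. }
    apply cont_rcont. apply (ex_derive_continuous (K:=R_AbsRing) (V:=R_NormedModule)).
    eexists; apply D1; auto. apply lt_tm with y; auto.
  - intros t Ht1 Ht2. apply D1; auto. lra.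
  - intros t Ht1 Ht2. left. apply P1; auto. lra.
Qed.

Lemma sol_of_max a b c t0 beta beta0 tm f :
  1 < a -> 0 < b -> 1 < c -> c < 3 / 2 -> 0 < t0 -> 0 < beta -> 0 < beta0 ->
  is_max_sol a b c t0 beta beta0 tm f ->
  exists f1 f2, SOL a b c t0 beta beta0 tm f f1 f2.
Proof.
  intros Ha Hb Hc1 Hc2 Ht0 Hbe Hbe0 [Htm [[f1 [f2 [Hd1 [Hd2 [Hc [Hode [Hf0 Hf10]]]]]]] _]].
  exists f1, f2. constructor; auto.
  intros t Ht. destruct (Hode t Ht) as [_ H]. lra.
Qed.

Lemma FI_of_max a b c t0 beta beta0 tm f f1 f2 :
  SOL a b c t0 beta beta0 tm f f1 f2 ->
  is_max_sol a b c t0 beta beta0 tm f ->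
  filterlim f (to_left tm) (Rbar_locally p_infty).
Proof.
  intros S [_ [_ Hmax]].
  assert (Htm := S_tm _ _ _ _ _ _ _ _ _ _ S).
  assert (Ht0 := S_t0 _ _ _ _ _ _ _ _ _ _ S).
  assert (Hbe := S_beta _ _ _ _ _ _ _ _ _ _ S).
  assert (HM : forall M, to_left tm (fun t => M < f t)).
  { intros M. destruct tm as [r| |]; simpl in Htm.
    - destruct (classic (exists t, t0 <= t /\ t < r /\ M < f t)) as [[t [Ht1 [Ht2 Ht3]]]|Hn].
      + apply (to_left_of t); simpl; auto. intros s Hs Hsr.
        assert (f t <= f s) by (apply (f_mono _ _ _ _ _ _ _ _ _ _ S); auto). lra.
      + exfalso. apply Hmax.
        apply (extend _ _ _ _ _ _ _ _ _ _ M S).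
        intros t Ht Htr. apply Rnot_lt_le. intro Hlt. apply Hn. exists t. auto.
    - destruct (sol_v _ _ _ _ _ _ _ _ _ _ S) as [m [Hm Hv]].
      destruct (sol_pos _ _ _ _ _ _ _ _ _ _ S) as [P1 P2].
      assert (Du := uf_der _ _ _ _ _ _ _ _ _ _ S).
      set (T := t0 + 1).
      assert (Hg : forall t, T <= t -> uf f T + m * (ln t - ln T) <= uf f t).
      { intros t Ht. apply (mono2 T p_infty (uf f) (fun s => f1 s / (1 + f s)) ln (fun s => / s) m); simpl; auto.
        - intros s Hs _. apply Du; simpl; auto. unfold T in Hs; lra.
        - intros s Hs _. assert (0 < s) by (unfold T in Hs; lra). auto_derive. auto. field. lra.
        - intros s Hs _. assert (Hvs := Hv s ltac:(unfold T in Hs; lra) I). unfold vfun in Hvs.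
          assert (Hf := P2 s ltac:(unfold T in Hs; lra) I).
          assert (0 < s) by (unfold T in Hs; lra).
          replace (f1 s / (1 + f s)) with ((s * f1 s / (1 + f s)) * / s) by (field; split; lra).
          apply Rmult_le_compat_r. left; apply Rinv_0_lt_compat; lra. lra. }
      set (W := ln (1 + Rabs M) + 1).
      apply (to_left_of (T * exp (W / m))); simpl; auto.
      intros s Hs _.
      assert (HT : 0 < T) by (unfold T; lra).
      assert (HTs : T <= s).
      { apply Rle_trans with (T * exp (W / m)); auto.
        rewrite <- (Rmult_1_r T) at 1. apply Rmult_le_compat_l. lra.
        rewrite <- exp_0. destruct (Rle_lt_or_eq_dec 0 (W / m)) as [h|h].
        apply Rdiv_le_0_compat; [|lra]. unfold W. assert (0 <= ln (1 + Rabs M)).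
        { rewrite <- ln_1. apply ln_le. lra. generalize (Rabs_pos M); lra. } lra.
        left; apply exp_increasing; auto. rewrite h; lra. }
      specialize (Hg s HTs).
      assert (HuT : 0 <= uf f T).
      { unfold uf. rewrite <- ln_1. apply ln_le. lra. generalize (P2 T ltac:(unfold T; lra) I); lra. }
      assert (Hln : W / m <= ln s - ln T).
      { assert (ln (T * exp (W / m)) <= ln s).
        { destruct (Rle_lt_or_eq_dec _ _ Hs) as [h|h]. left; apply ln_increasing; auto.
          apply Rmult_lt_0_compat; auto; apply exp_pos. rewrite h; lra. }
        rewrite ln_mult, ln_exp in H; auto. lra. apply exp_pos. }
      assert (m * (W / m) <= m * (ln s - ln T)) by (apply Rmult_le_compat_l; lra).
      replace (m * (W / m)) with W in H by (field; lra).
      assert (HuW : ln (1 + Rabs M) < uf f s) by (unfold W in H; lra).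
      unfold uf in HuW.
      assert (1 + Rabs M < 1 + f s).
      { apply ln_lt_inv; auto. generalize (Rabs_pos M); lra.
        generalize (P2 s ltac:(unfold T in HTs; lra) I); lra. }
      assert (M <= Rabs M) by apply RRle_abs. lra.
    - contradiction. }
  intros P [M HP]. unfold filtermap. apply (filter_imp (fun t => M < f t)). intros t Ht. apply HP; exact Ht. apply HM.
Qed.

Theorem propositiont (a b c t0 beta beta0 : R) (tm : Rbar) (f : R -> R)
  (theta A : R) :
  1 < a -> 0 < b -> 1 < c -> c < 3 / 2 -> 0 < t0 -> 0 < beta -> 0 < beta0 ->
  is_max_sol a b c t0 beta beta0 tm f ->
  1 <= theta -> 0 < A -> A * theta < 2 * b / (3 - 2 * c) ->
  C1_on (Ico t0 tm) (eta A theta t0 f) /\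
  (exists Cstar : R, 0 < Cstar /\
     forall t, Ico t0 tm t -> 0 < eta A theta t0 f t /\ eta A theta t0 f t <= Cstar) /\
  filterlim (eta A theta t0 f)
    (to_left tm) (locally 0).
Proof.
  intros Ha Hb Hc1 Hc2 Ht0 Hbe Hbe0 Hmax Hth HA Hk.
  destruct (sol_of_max a b c t0 beta beta0 tm f Ha Hb Hc1 Hc2 Ht0 Hbe Hbe0 Hmax) as [f1 [f2 S]].
  split. apply (eta_C1 _ _ _ _ _ _ _ _ _ _ theta A S).
  apply (eta_main _ _ _ _ _ _ _ _ _ _ theta A S Hth HA Hk).
  apply (FI_of_max _ _ _ _ _ _ _ _ _ _ S Hmax).
Qed.
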